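(* Let $n\ge2$, let $I\subseteq[0,\infty)$ be an interval with non-empty interior, let $\tilde{\mathbf{P}}$ be a generalized $n$-system on $I$, and let $D$ be a discrete subset of $I$. Then there exists an $n$-system $\mathbf{P}$ on $I$ such that $\mathbf{P}(t)=\tilde{\mathbf{P}}(t)$ for every $t\in D$.
   Context: Let $I\subseteq[0,\infty)$ be an interval with non-empty interior. A map $\mathbf{P}\colon I\to\mathbb{R}^n$ is continuous piecewise linear if it is continuous, the set $D$ of points of $I$ where it is not differentiable (including the endpoints of $I$ that lie in $I$) is discrete in $I$, and its derivative is locally constant on $I\setminus D$. An $n$-system on $I$ is a continuous piecewise linear map $\mathbf{P}=(P_1,\dots,P_n)\colon I\to\mathbb{R}^n$ such that: (S1) for each $q\in I$, $0\le P_1(q)\le\cdots\le P_n(q)$ and $P_1(q)+\cdots+P_n(q)=q$; (S2) on each non-empty open subinterval $H$ of $I$ on which $\mathbf{P}$ is differentiable, there is $r\in\{1,\dots,n\}$ such that $P_r$ has slope $1$ on $H$ and all $P_j$ with $j\ne r$ are constant on $H$; (S3) if $q$ is an interior point of $I$ where $\mathbf{P}$ is not differentiable and the integers $r,s$ with $P_r'(q^-)=P_s'(q^+)=1$ satisfy $r<s$, then $P_r(q)=P_{r+1}(q)=\cdots=P_s(q)$. A generalized $n$-system on $I$ is a continuous piecewise linear map $\mathbf{P}=(P_1,\dots,P_n)\colon I\to\mathbb{R}^n$ such that: (G1) for each $q\in I$, $0\le P_1(q)\le\cdots\le P_n(q)$ and $P_1(q)+\cdots+P_n(q)=q$; (G2)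 on each non-empty open subinterval $H$ of $I$ on which $\mathbf{P}$ is differentiable, there are integers $1\le \underline{r}\le\overline{r}\le n$ such that $P_{\underline r},\dots,P_{\overline r}$ coincide on $H$ and have slope $1/(\overline r-\underline r+1)$, while every other $P_j$ is constant on $H$; (G3) if $q$ is an interior point of $I$ where $\mathbf{P}$ is not differentiable, and $\underline r,\overline r,\underline s,\overline s$ are the integers with $P_j'(q^-)=1/(\overline r-\underline r+1)$ for $\underline r\le j\le\overline r$ and $P_j'(q^+)=1/(\overline s-\underline s+1)$ for $\underline s\le j\le \overline s$ (as in (G2) on the adjacent intervals), and if $\underline r<\overline s$, then $P_{\underline r}(q)=P_{\underline r+1}(q)=\cdots=P_{\overline s}(q)$. *)

(* Defs.v *)
From Stdlib Require Import Reals Lra Lia List.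
Open Scope R_scope.

(* A vector-valued map I -> R^n is represented as P : R -> nat -> R;
   component j (0-based, j < n) is P t j, i.e. paper's P_{j+1}.
   Only the values for t in I and j < n matter. *)

Definition is_interval (I : R -> Prop) : Prop :=
  forall x y z, I x -> I z -> x <= y -> y <= z -> I y.

Definition good_interval (I : R -> Prop) : Prop :=
  is_interval I /\ (forall x, I x -> 0 <= x) /\
  exists a b, a < b /\ I a /\ I b.

Definition interior (I : R -> Prop) (x : R) : Prop :=
  exists eps, 0 < eps /\ forall y, Rabs (y - x) < eps -> I y.

Definition discrete_in (I S : R -> Prop) : Prop :=
  forall x, I x -> exists eps, 0 < eps /\
    exists l : list R, forall y, S y -> Rabs (y - x) < eps -> In y l.

Definition comp (P : R -> nat -> R) (j : nat) : R -> R := fun t => P t j.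

Definition differentiable_at (n : nat) (P : R -> nat -> R) (x : R) : Prop :=
  forall j, (j < n)%nat -> exists l, derivable_pt_lim (comp P j) x l.

Definition nondiff_set (n : nat) (I : R -> Prop) (P : R -> nat -> R) (x : R) : Prop :=
  I x /\ (~ interior I x \/ ~ differentiable_at n P x).

Definition continuous_on (n : nat) (I : R -> Prop) (P : R -> nat -> R) : Prop :=
  forall j x, (j < n)%nat -> I x -> forall eps, 0 < eps ->
    exists delta, 0 < delta /\
      forall y, I y -> Rabs (y - x) < delta -> Rabs (P y j - P x j) < eps.

Definition cont_piecewise_linear (n : nat) (I : R -> Prop) (P : R -> nat -> R) : Prop :=
  continuous_on n I P /\
  discrete_in I (nondiff_set n I P) /\
  (forall t, I t -> ~ nondiff_set n I P t ->
     exists eps, 0 < eps /\ exists v : nat -> R,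
       forall s, I s -> ~ nondiff_set n I P s -> Rabs (s - t) < eps ->
         forall j, (j < n)%nat -> derivable_pt_lim (comp P j) s (v j)).

Definition left_deriv (f : R -> R) (x l : R) : Prop :=
  forall eps, 0 < eps -> exists delta, 0 < delta /\
    forall h, - delta < h -> h < 0 -> Rabs ((f (x + h) - f x) / h - l) < eps.

Definition right_deriv (f : R -> R) (x l : R) : Prop :=
  forall eps, 0 < eps -> exists delta, 0 < delta /\
    forall h, 0 < h -> h < delta -> Rabs ((f (x + h) - f x) / h - l) < eps.

Fixpoint sumR (f : nat -> R) (n : nat) : R :=
  match n with O => 0 | S k => sumR f k + f k end.

(* (S1) = (G1) *)
Definition cond1 (n : nat) (I : R -> Prop) (P : R -> nat -> R) : Prop :=
  forall q, I q ->
    0 <= P q 0%nat /\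
    (forall j, (S j < n)%nat -> P q j <= P q (S j)) /\
    sumR (P q) n = q.

Definition diff_subinterval (n : nat) (I : R -> Prop) (P : R -> nat -> R) (a b : R) : Prop :=
  a < b /\ (forall t, a < t < b -> I t) /\
  (forall t, a < t < b -> differentiable_at n P t).

Definition n_system (n : nat) (I : R -> Prop) (P : R -> nat -> R) : Prop :=
  cont_piecewise_linear n I P /\
  cond1 n I P /\
  (* (S2) *)
  (forall a b, diff_subinterval n I P a b ->
     exists r, (r < n)%nat /\
       forall t, a < t < b ->
         forall j, (j < n)%nat ->
           derivable_pt_lim (comp P j) t (if Nat.eqb j r then 1 else 0)) /\
  (* (S3) *)
  (forall q, interior I q -> ~ differentiable_at n P q ->
     forall r s, (r < s)%nat -> (s < n)%nat ->
       left_deriv (comp P r) q 1 -> right_deriv (comp P s) q 1 ->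
       forall j, (r <= j <= s)%nat -> P q j = P q r).

Definition in_block (lo hi j : nat) : bool := Nat.leb lo j && Nat.leb j hi.

Definition block_slope (lo hi j : nat) : R :=
  if in_block lo hi j then 1 / INR (hi - lo + 1) else 0.

Definition gen_n_system (n : nat) (I : R -> Prop) (P : R -> nat -> R) : Prop :=
  cont_piecewise_linear n I P /\
  cond1 n I P /\
  (* (G2) *)
  (forall a b, diff_subinterval n I P a b ->
     exists lo hi, (lo <= hi)%nat /\ (hi < n)%nat /\
       forall t, a < t < b ->
         (forall j, (lo <= j <= hi)%nat -> P t j = P t lo) /\
         (forall j, (j < n)%nat ->
            derivable_pt_lim (comp P j) t (block_slope lo hi j))) /\
  (* (G3) *)
  (forall q, interior I q -> ~ differentiable_at n P q ->
     forall rlo rhi slo shi,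
       (rlo <= rhi)%nat -> (rhi < n)%nat -> (slo <= shi)%nat -> (shi < n)%nat ->
       (forall j, (j < n)%nat -> left_deriv (comp P j) q (block_slope rlo rhi j)) ->
       (forall j, (j < n)%nat -> right_deriv (comp P j) q (block_slope slo shi j)) ->
       (rlo < shi)%nat ->
       forall j, (rlo <= j <= shi)%nat -> P q j = P q rlo).

(* Main.v *)
Require Import Defs.
From Stdlib Require Import Reals Lra Lia List ClassicalEpsilon Classical.
Open Scope R_scope.

Lemma dpl_affine_loc (f : R -> R) x c rho :
  0 < rho -> (forall h, Rabs h < rho -> f (x + h) - f x = c * h) ->
  derivable_pt_lim f x c.
Proof.
  intros Hr Hf eps Heps. exists (mkposreal rho Hr). intros h Hh0 Hh. simpl in Hh.
  rewrite (Hf h Hh). replace (c*h/h - c) with 0 by (field; auto).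
  rewrite Rabs_R0; lra.
Qed.

Lemma small_pos a b : 0 < a -> 0 < b -> 0 < Rmin (a/2) (b/2) /\ Rmin (a/2) (b/2) <= a/2 /\ Rmin (a/2) (b/2) <= b/2.
Proof.
  intros. split. apply Rmin_glb_lt; lra. split; [apply Rmin_l|apply Rmin_r].
Qed.

Lemma dpl_left_unique f x l c rho :
  0 < rho -> derivable_pt_lim f x l ->
  (forall h, -rho < h < 0 -> f (x + h) - f x = c * h) -> l = c.
Proof.
  intros Hr Hd Hf. destruct (Req_dec l c) as [|Hne]; auto.
  assert (He: 0 < Rabs (l - c)) by (apply Rabs_pos_lt; lra).
  destruct (Hd _ He) as [[dl Hdp] Hdl]. simpl in Hdl.
  destruct (small_pos dl rho Hdp Hr) as [H1 [H2 H3]].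
  set (m := Rmin (dl/2) (rho/2)) in *.
  specialize (Hdl (-m)).
  rewrite Hf in Hdl by lra.
  replace (c*(-m)/(-m) - l) with (c - l) in Hdl by (field; lra).
  rewrite Rabs_minus_sym in Hdl.
  assert (Rabs (-m) < dl) by (rewrite Rabs_left; lra).
  assert (-m <> 0) by lra. specialize (Hdl H0 H). lra.
Qed.

Lemma dpl_right_unique f x l c rho :
  0 < rho -> derivable_pt_lim f x l ->
  (forall h, 0 < h < rho -> f (x + h) - f x = c * h) -> l = c.
Proof.
  intros Hr Hd Hf. destruct (Req_dec l c) as [|Hne]; auto.
  assert (He: 0 < Rabs (l - c)) by (apply Rabs_pos_lt; lra).
  destruct (Hd _ He) as [[dl Hdp] Hdl]. simpl in Hdl.
  destruct (small_pos dl rho Hdp Hr) as [H1 [H2 H3]].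
  set (m := Rmin (dl/2) (rho/2)) in *.
  specialize (Hdl m).
  rewrite Hf in Hdl by lra.
  replace (c*m/m - l) with (c - l) in Hdl by (field; lra).
  rewrite Rabs_minus_sym in Hdl.
  assert (Rabs m < dl) by (rewrite Rabs_right; lra).
  assert (m <> 0) by lra. specialize (Hdl H0 H). lra.
Qed.

Lemma ld_unique f x l c rho : 0 < rho -> left_deriv f x l ->
  (forall h, -rho < h < 0 -> f (x + h) - f x = c * h) -> l = c.
Proof.
  intros Hr Hd Hf. destruct (Req_dec l c) as [|Hne]; auto.
  assert (He: 0 < Rabs (l - c)) by (apply Rabs_pos_lt; lra).
  destruct (Hd _ He) as [dl [Hdp Hdl]].
  destruct (small_pos dl rho Hdp Hr) as [H1 [H2 H3]].
  set (m := Rmin (dl/2) (rho/2)) in *.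
  specialize (Hdl (-m)).
  rewrite Hf in Hdl by lra.
  replace (c*(-m)/(-m) - l) with (c - l) in Hdl by (field; lra).
  rewrite Rabs_minus_sym in Hdl.
  assert (- dl < -m) by lra. assert (-m < 0) by lra. specialize (Hdl H H0). lra.
Qed.

Lemma rd_unique f x l c rho : 0 < rho -> right_deriv f x l ->
  (forall h, 0 < h < rho -> f (x + h) - f x = c * h) -> l = c.
Proof.
  intros Hr Hd Hf. destruct (Req_dec l c) as [|Hne]; auto.
  assert (He: 0 < Rabs (l - c)) by (apply Rabs_pos_lt; lra).
  destruct (Hd _ He) as [dl [Hdp Hdl]].
  destruct (small_pos dl rho Hdp Hr) as [H1 [H2 H3]].
  set (m := Rmin (dl/2) (rho/2)) in *.
  specialize (Hdl m).
  rewrite Hf in Hdl by lra.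
  replace (c*m/m - l) with (c - l) in Hdl by (field; lra).
  rewrite Rabs_minus_sym in Hdl.
  assert (0 < m) by lra. assert (m < dl) by lra. specialize (Hdl H H0). lra.
Qed.

Lemma ld_affine f x c rho : 0 < rho ->
  (forall h, -rho < h < 0 -> f (x + h) - f x = c * h) -> left_deriv f x c.
Proof.
  intros Hr Hf eps He. exists rho. split; auto. intros h H1 H2.
  rewrite Hf by lra. replace (c*h/h - c) with 0 by (field; lra). rewrite Rabs_R0; lra.
Qed.

Lemma rd_affine f x c rho : 0 < rho ->
  (forall h, 0 < h < rho -> f (x + h) - f x = c * h) -> right_deriv f x c.
Proof.
  intros Hr Hf eps He. exists rho. split; auto. intros h H1 H2.
  rewrite Hf by lra. replace (c*h/h - c) with 0 by (field; lra). rewrite Rabs_R0; lra.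
Qed.

Lemma lim_aff (f : R -> R) x0 c a (S : R -> Prop) :
  (forall eps, 0 < eps -> exists delta, 0 < delta /\
      forall y, S y -> Rabs (y - x0) < delta -> Rabs (f y - f x0) < eps) ->
  (forall h, 0 < h -> exists y, Rabs (y - x0) < h /\ S y /\ f y = c + a * (y - x0)) ->
  f x0 = c.
Proof.
  intros Hc Hp. destruct (Req_dec (f x0) c) as [|Hne]; auto.
  set (d := Rabs (f x0 - c)).
  assert (Hd: 0 < d) by (apply Rabs_pos_lt; lra).
  destruct (Hc (d/2)) as [de [Hde Hc2]]; [lra|].
  assert (Ha: 0 < Rabs a + 1) by (pose proof (Rabs_pos a); lra).
  set (h := Rmin de (d / (2 * (Rabs a + 1)))).
  assert (Hh: 0 < h). { apply Rmin_glb_lt; auto. apply Rdiv_lt_0_compat; lra. }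
  destruct (Hp h Hh) as [y [Hy1 [Hy2 Hy3]]].
  assert (Hyd: Rabs (y - x0) < de) by (eapply Rlt_le_trans; [exact Hy1| apply Rmin_l]).
  specialize (Hc2 y Hy2 Hyd).
  assert (Hyh: Rabs (y - x0) <= d / (2 * (Rabs a + 1))) by (left; eapply Rlt_le_trans; [exact Hy1| apply Rmin_r]).
  assert (Hb: Rabs (f y - c) <= Rabs a * (d / (2 * (Rabs a + 1)))).
  { rewrite Hy3. replace (c + a*(y-x0) - c) with (a*(y-x0)) by ring. rewrite Rabs_mult.
    apply Rmult_le_compat_l; auto. apply Rabs_pos. }
  assert (Hb2: Rabs a * (d / (2 * (Rabs a + 1))) < d/2).
  { replace (Rabs a * (d / (2 * (Rabs a + 1)))) with ((d/2) * (Rabs a / (Rabs a + 1))) by (field; lra).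
    assert (Rabs a / (Rabs a + 1) < 1). { apply (Rmult_lt_reg_r (Rabs a + 1)); auto.
      unfold Rdiv. rewrite Rmult_assoc, Rinv_l by lra. lra. }
    assert (0 <= Rabs a / (Rabs a + 1)). { unfold Rdiv; apply Rmult_le_pos; [apply Rabs_pos| left; apply Rinv_0_lt_compat; lra]. }
    nra. }
  assert (d <= Rabs (f x0 - f y) + Rabs (f y - c)).
  { unfold d. replace (f x0 - c) with ((f x0 - f y) + (f y - c)) by ring. apply Rabs_triang. }
  rewrite Rabs_minus_sym in Hc2. lra.
Qed.

Lemma lim_le A B c d E : 0 < E ->
  (forall h, 0 < h < E -> A + c * h <= B + d * h) -> A <= B.
Proof.
  intros HE H. destruct (Rle_dec A B) as [|Hn]; auto. exfalso.
  assert (Hab: 0 < A - B) by lra.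
  assert (HK: 0 < Rabs c + Rabs d + 1) by (pose proof (Rabs_pos c); pose proof (Rabs_pos d); lra).
  set (h := Rmin (E/2) ((A - B) / (2 * (Rabs c + Rabs d + 1)))).
  assert (Hh: 0 < h). { apply Rmin_glb_lt. lra. apply Rdiv_lt_0_compat; lra. }
  assert (Hh1: h <= E/2) by apply Rmin_l.
  assert (Hh2: h <= (A - B) / (2 * (Rabs c + Rabs d + 1))) by apply Rmin_r.
  assert (HhE: h < E) by lra. specialize (H h (conj Hh HhE)).
  assert (Hh3: (Rabs c + Rabs d + 1) * h <= (A - B)/2).
  { apply (Rmult_le_compat_l (Rabs c + Rabs d + 1)) in Hh2; [|lra].
    replace ((Rabs c + Rabs d + 1) * ((A - B) / (2 * (Rabs c + Rabs d + 1)))) with ((A-B)/2) in Hh2 by (field; lra).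
    lra. }
  assert (d * h - c * h <= (Rabs c + Rabs d) * h).
  { pose proof (Rle_abs d). pose proof (Rle_abs (-c)). rewrite Rabs_Ropp in H1. nra. }
  nra.
Qed.

Lemma in_block_iff lo hi j : in_block lo hi j = true <-> (lo <= j <= hi)%nat.
Proof.
  unfold in_block. rewrite Bool.andb_true_iff, !Nat.leb_le. tauto.
Qed.

Lemma in_block_false lo hi j : in_block lo hi j = false <-> ~ (lo <= j <= hi)%nat.
Proof.
  rewrite <- in_block_iff. destruct (in_block lo hi j); split; congruence || (intros; auto; congruence).
Qed.

Ltac blk lo hi j :=
  let E := fresh "E" in
  destruct (in_block lo hi j) eqn:E;
  [apply in_block_iff in E | apply in_block_false in E].

Lemma sumR_ext f g m : (forall j, (j < m)%nat -> f j = g j) -> sumR f m = sumR g m.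
Proof.
  induction m; simpl; intros H; auto. rewrite IHm by (intros; apply H; lia). rewrite H by lia. auto.
Qed.

Lemma sumR_plus f g m : sumR (fun j => f j + g j) m = sumR f m + sumR g m.
Proof. induction m; simpl; [lra|]. rewrite IHm. ring. Qed.

Lemma sumR_scal c f m : sumR (fun j => c * f j) m = c * sumR f m.
Proof. induction m; simpl; [ring|]. rewrite IHm. ring. Qed.

Lemma sumR_const c m : sumR (fun _ => c) m = INR m * c.
Proof. induction m; simpl sumR; [simpl; ring|]. rewrite IHm, S_INR. ring. Qed.

Lemma sumR_shift f m : sumR f (S m) = f 0%nat + sumR (fun j => f (S j)) m.
Proof. induction m; simpl in *; [ring|]. rewrite IHm. ring. Qed.

Lemma sumR_zero f m : (forall j, (j < m)%nat -> f j = 0) -> sumR f m = 0.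
Proof. intros H. rewrite (sumR_ext f (fun _ => 0)) by auto. rewrite sumR_const. ring. Qed.

Lemma sumR_ind1 h c m : (h < m)%nat -> sumR (fun j => if Nat.eqb j h then c else 0) m = c.
Proof.
  induction m; intros Hh; [lia|]. simpl.
  destruct (Nat.eq_dec h m) as [->|Hne].
  - rewrite sumR_zero. rewrite Nat.eqb_refl. ring.
    intros j Hj. destruct (Nat.eqb_spec j m); [lia|auto].
  - rewrite IHm by lia. destruct (Nat.eqb_spec m h); [lia|ring].
Qed.

Lemma sumR_S f m : sumR f (S m) = sumR f m + f m.
Proof. reflexivity. Qed.

Lemma sumR_zero_from f a m : (a <= m)%nat -> (forall j, (a <= j)%nat -> f j = 0) -> sumR f m = sumR f a.
Proof.
  induction m; intros Ha H.
  - assert (a = 0%nat) by lia. subst. auto.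
  - destruct (Nat.eq_dec a (S m)) as [->|Hne]; auto.
    simpl. rewrite IHm by (auto; lia). rewrite (H m) by lia. ring.
Qed.

Lemma sumR_block_aux lo d : forall f,
  sumR (fun j => if in_block lo (lo+d) j then f (lo + d - j)%nat else 0) (S (lo + d)) = sumR f (S d).
Proof.
  induction d; intros f.
  - simpl sumR at 1. rewrite sumR_zero.
    + replace (lo + 0)%nat with lo by lia.
      assert (in_block lo lo lo = true) by (apply in_block_iff; lia). rewrite H.
      replace (lo - lo)%nat with 0%nat by lia. simpl. ring.
    + intros j Hj. blk lo (lo+0)%nat j; auto; lia.
  - replace (S (lo + S d)) with (S (S (lo + d))) by lia.
    rewrite sumR_S.
    rewrite (sumR_ext _ (fun j => if in_block lo (lo + d) j then f (S (lo + d - j)) else 0)).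
    + pose proof (IHd (fun m => f (S m))) as IH. cbv beta in IH. rewrite IH. assert (in_block lo (lo + S d) (S (lo+d)) = true) by (apply in_block_iff; lia).
      rewrite H. replace (lo + S d - S (lo + d))%nat with 0%nat by lia.
      rewrite (sumR_shift f (S d)). ring.
    + intros j Hj. simpl in Hj. blk lo (lo + S d)%nat j; blk lo (lo+d)%nat j; try lia; auto.
      replace (lo + S d - j)%nat with (S (lo + d - j)) by lia. auto.
Qed.

Lemma sumR_block lo hi n f : (lo <= hi)%nat -> (hi < n)%nat ->
  sumR (fun j => if in_block lo hi j then f (hi - j)%nat else 0) n = sumR f (hi - lo + 1).
Proof.
  intros H1 H2. rewrite (sumR_zero_from _ (S hi)) by (try lia; intros j Hj; blk lo hi j; auto; lia).
  pose proof (sumR_block_aux lo (hi-lo) f) as H.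
  replace (lo + (hi - lo))%nat with hi in H by lia. rewrite H. f_equal. lia.
Qed.

Definition clamp (x d : R) : R := Rmin (Rmax x 0) d.

Lemma clamp_lo x d : x <= 0 -> 0 <= d -> clamp x d = 0.
Proof. unfold clamp, Rmin, Rmax; intros; repeat destruct Rle_dec; lra. Qed.
Lemma clamp_mid x d : 0 <= x <= d -> clamp x d = x.
Proof. unfold clamp, Rmin, Rmax; intros; repeat destruct Rle_dec; lra. Qed.
Lemma clamp_hi x d : d <= x -> 0 <= d -> clamp x d = d.
Proof. unfold clamp, Rmin, Rmax; intros; repeat destruct Rle_dec; lra. Qed.
Lemma clamp_bounds x d : 0 <= d -> 0 <= clamp x d <= d.
Proof. unfold clamp, Rmin, Rmax; intros; repeat destruct Rle_dec; lra. Qed.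
Lemma clamp_mono x y d : x <= y -> clamp x d <= clamp y d.
Proof. unfold clamp, Rmin, Rmax; intros; repeat destruct Rle_dec; lra. Qed.

Lemma sum_clamp e dl k : 0 <= e -> 0 <= dl ->
  sumR (fun m => clamp (e - INR m * dl) dl) k = Rmin e (INR k * dl).
Proof.
  intros He Hd. induction k.
  - simpl. unfold Rmin. destruct Rle_dec; lra.
  - simpl sumR. rewrite IHk. rewrite S_INR.
    assert (0 <= INR k * dl) by (apply Rmult_le_pos; auto; apply pos_INR).
    set (A := INR k * dl) in *. replace ((INR k + 1) * dl) with (A + dl) by (unfold A; ring).
    destruct (Rle_dec e A).
    + rewrite clamp_lo by lra. unfold Rmin; repeat destruct Rle_dec; lra.
    + destruct (Rle_dec e (A + dl)).
      * rewrite clamp_mid by lra. unfold Rmin; repeat destruct Rle_dec; lra.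
      * rewrite clamp_hi by lra. unfold Rmin; repeat destruct Rle_dec; lra.
Qed.

Lemma INR_le_mul a b dl : (a <= b)%nat -> 0 <= dl -> INR a * dl <= INR b * dl.
Proof. intros. apply Rmult_le_compat_r; auto. apply le_INR; auto. Qed.

Lemma find_m_left K dl e : 0 < dl -> 0 < e <= INR K * dl ->
  exists m, (m < K)%nat /\ INR m * dl < e <= INR (S m) * dl.
Proof.
  induction K; intros Hd He.
  - simpl in He. lra.
  - destruct (Rle_dec e (INR K * dl)).
    + assert (0 < e <= INR K * dl) by lra. destruct (IHK Hd H) as [m [H1 H2]]. exists m; split; auto; lia.
    + exists K. split; [lia|]. rewrite S_INR. rewrite S_INR in He. lra.
Qed.

Lemma find_m_right K dl e : 0 < dl -> 0 <= e < INR K * dl ->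
  exists m, (m < K)%nat /\ INR m * dl <= e < INR (S m) * dl.
Proof.
  induction K; intros Hd He.
  - simpl in He. lra.
  - destruct (Rlt_dec e (INR K * dl)).
    + assert (0 <= e < INR K * dl) by lra. destruct (IHK Hd H) as [m [H1 H2]]. exists m; split; auto; lia.
    + exists K. split; [lia|]. rewrite S_INR. rewrite S_INR in He. lra.
Qed.

Lemma clamp_band mj m dl e' : 0 < dl -> INR m * dl <= e' <= INR (S m) * dl ->
  clamp (e' - INR mj * dl) dl =
  (if (mj <? m)%nat then dl else if (mj =? m)%nat then e' - INR m * dl else 0).
Proof.
  intros Hd He. rewrite S_INR in He.
  destruct (Nat.ltb_spec mj m).
  - apply clamp_hi; [|lra]. assert (INR (S mj) * dl <= INR m * dl) by (apply INR_le_mul; [lia|lra]).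
    rewrite S_INR in H0. lra.
  - destruct (Nat.eqb_spec mj m).
    + subst. apply clamp_mid. lra.
    + apply clamp_lo; [|lra]. assert (INR (S m) * dl <= INR mj * dl) by (apply INR_le_mul; [lia|lra]).
      rewrite S_INR in H0. lra.
Qed.

Definition Qf (lo hi : nat) (dl e : R) (j : nat) : R :=
  (if in_block lo hi j then clamp (e - INR (hi - j) * dl) dl else 0) +
  (if Nat.eqb j hi then Rmax 0 (e - INR (hi - lo + 1) * dl) else 0).

Lemma Rmax_0_neg x : x <= 0 -> Rmax 0 x = 0.
Proof. unfold Rmax; destruct Rle_dec; lra. Qed.
Lemma Rmax_0_pos x : 0 <= x -> Rmax 0 x = x.
Proof. unfold Rmax; destruct Rle_dec; lra. Qed.

Lemma Qf_nonneg lo hi dl e j : 0 <= dl -> 0 <= Qf lo hi dl e j.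
Proof.
  intros Hd. unfold Qf. assert (0 <= (if in_block lo hi j then clamp (e - INR (hi - j) * dl) dl else 0)).
  { destruct in_block; [apply clamp_bounds; auto| lra]. }
  assert (0 <= (if Nat.eqb j hi then Rmax 0 (e - INR (hi - lo + 1) * dl) else 0)).
  { destruct Nat.eqb; [apply Rmax_l|lra]. }
  lra.
Qed.

Lemma Qf_0 lo hi dl j : 0 <= dl -> Qf lo hi dl 0 j = 0.
Proof.
  intros Hd. unfold Qf. rewrite clamp_lo; auto.
  - rewrite Rmax_0_neg. destruct in_block, Nat.eqb; ring.
    assert (0 <= INR (hi - lo + 1) * dl) by (apply Rmult_le_pos; auto; apply pos_INR). lra.
  - assert (0 <= INR (hi - j) * dl) by (apply Rmult_le_pos; auto; apply pos_INR). lra.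
Qed.

Lemma Qband lo hi dl m e' j : 0 < dl -> (lo <= hi)%nat -> (m < hi - lo + 1)%nat ->
  INR m * dl <= e' <= INR (S m) * dl ->
  Qf lo hi dl e' j = (if in_block lo hi j then
     (if (hi - j <? m)%nat then dl else if (hi - j =? m)%nat then e' - INR m * dl else 0) else 0).
Proof.
  intros Hd Hlh Hm He. unfold Qf.
  rewrite Rmax_0_neg.
  - replace (if Nat.eqb j hi then 0 else 0) with 0 by (destruct (Nat.eqb j hi); auto).
    rewrite Rplus_0_r. destruct (in_block lo hi j); [rewrite (clamp_band (hi - j) m dl e') by auto|]; reflexivity.
  - assert (INR (S m) * dl <= INR (hi - lo + 1) * dl) by (apply INR_le_mul; [lia|lra]). lra.
Qed.

Lemma Qsat lo hi dl e' j : 0 < dl -> (lo <= hi)%nat ->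
  INR (hi - lo + 1) * dl <= e' ->
  Qf lo hi dl e' j = (if in_block lo hi j then dl else 0) +
                     (if Nat.eqb j hi then e' - INR (hi - lo + 1) * dl else 0).
Proof.
  intros Hd Hlh He. unfold Qf. rewrite Rmax_0_pos by lra. f_equal.
  blk lo hi j; auto. apply clamp_hi; [|lra].
  assert (INR (S (hi - j)) * dl <= INR (hi - lo + 1) * dl) by (apply INR_le_mul; [lia|lra]).
  rewrite S_INR in H. lra.
Qed.

Lemma QR0 lo hi dl e' j : 0 < dl -> (lo <= hi)%nat -> 0 <= e' < dl ->
  Qf lo hi dl e' j = if Nat.eqb j hi then e' else 0.
Proof.
  intros Hd Hlh He. rewrite (Qband lo hi dl 0) by (auto; try lia; simpl; lra).
  blk lo hi j.
  - destruct (Nat.ltb_spec (hi - j) 0); [lia|]. destruct (Nat.eqb_spec (hi - j) 0);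
    destruct (Nat.eqb_spec j hi); try lia; simpl; ring.
  - destruct (Nat.eqb_spec j hi); auto; lia.
Qed.

Lemma QLk lo hi dl e' j : 0 < dl -> (lo <= hi)%nat ->
  INR (hi - lo + 1) * dl - dl < e' <= INR (hi - lo + 1) * dl ->
  Qf lo hi dl e' j = (if in_block lo hi j then dl else 0) +
                     (if Nat.eqb j lo then e' - INR (hi - lo + 1) * dl else 0).
Proof.
  intros Hd Hlh He.
  assert (HK: INR (hi - lo + 1) = INR (hi - lo) + 1).
  { replace (hi - lo + 1)%nat with (S (hi - lo)) by lia. apply S_INR. }
  rewrite (Qband lo hi dl (hi - lo)) by (auto; try lia; rewrite S_INR; rewrite HK in He; lra).
  blk lo hi j.
  - destruct (Nat.ltb_spec (hi - j) (hi - lo)); destruct (Nat.eqb_spec (hi - j) (hi - lo));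
    destruct (Nat.eqb_spec j lo); try lia; rewrite ?HK; ring.
  - destruct (Nat.eqb_spec j lo); try lia; ring.
Qed.

Lemma QLR lo hi dl e : (lo <= hi)%nat -> 0 < dl -> 0 < e ->
  exists etaL etaR aL aR,
   0 < etaL <= e /\ 0 < etaR /\
   (e < INR (hi-lo+1) * dl -> e + etaR <= INR (hi - lo + 1) * dl) /\
   (lo <= aL <= hi)%nat /\ (lo <= aR <= hi)%nat /\
   (forall e', e - etaL < e' <= e -> forall j,
       Qf lo hi dl e' j = Qf lo hi dl e j + (if Nat.eqb j aL then e' - e else 0)) /\
   (forall e', e <= e' < e + etaR -> forall j,
       Qf lo hi dl e' j = Qf lo hi dl e j + (if Nat.eqb j aR then e' - e else 0)) /\
   ((aL < aR)%nat -> forall j, (lo <= j <= hi)%nat -> Qf lo hi dl e j = Qf lo hi dl e lo).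
Proof.
  intros Hlh Hd He. set (K := (hi - lo + 1)%nat).
  assert (HL: exists etaL aL, 0 < etaL <= e /\ (lo <= aL <= hi)%nat /\
     (forall e', e - etaL < e' <= e -> forall j,
       Qf lo hi dl e' j = Qf lo hi dl e j + (if Nat.eqb j aL then e' - e else 0)) /\
     (INR K * dl < e -> aL = hi) /\
     (e <= INR K * dl -> exists m, (m < K)%nat /\ aL = (hi - m)%nat /\ INR m * dl < e <= INR (S m) * dl)).
  { destruct (Rle_dec e (INR K * dl)) as [Hle|Hgt].
    - destruct (find_m_left K dl e) as [m [Hm Hme]]; auto.
      assert (0 <= INR m * dl) by (apply Rmult_le_pos; [apply pos_INR|lra]).
      exists (e - INR m * dl), (hi - m)%nat. split; [lra|]. split; [unfold K in Hm; lia|].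
      split; [|split; [intros; lra| intros; exists m; auto]].
      intros e' He' j.
      rewrite (Qband lo hi dl m e') by (auto; lra).
      rewrite (Qband lo hi dl m e) by (auto; lra).
      blk lo hi j.
      + destruct (Nat.ltb_spec (hi - j) m); destruct (Nat.eqb_spec (hi - j) m);
        destruct (Nat.eqb_spec j (hi - m)); try lia; ring.
      + destruct (Nat.eqb_spec j (hi - m)); try lia; ring.
    - exists (e - INR K * dl), hi. split.
      { split; [lra|]. assert (0 <= INR K * dl) by (apply Rmult_le_pos; [apply pos_INR|lra]). lra. }
      split; [lia|]. split; [|split; [auto|intros; lra]].
      intros e' He' j. rewrite !Qsat by (auto; unfold K in *; lra).
      destruct (Nat.eqb_spec j hi); ring. }
  assert (HR: exists etaR aR, 0 < etaR /\ (e < INR K * dl -> e + etaR <= INR K * dl) /\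
     (lo <= aR <= hi)%nat /\
     (forall e', e <= e' < e + etaR -> forall j,
       Qf lo hi dl e' j = Qf lo hi dl e j + (if Nat.eqb j aR then e' - e else 0)) /\
     (INR K * dl <= e -> aR = hi) /\
     (e < INR K * dl -> exists m, (m < K)%nat /\ aR = (hi - m)%nat /\ INR m * dl <= e < INR (S m) * dl)).
  { destruct (Rlt_dec e (INR K * dl)) as [Hlt|Hge].
    - destruct (find_m_right K dl e) as [m [Hm Hme]]; auto. lra.
      exists (INR (S m) * dl - e), (hi - m)%nat. split; [lra|]. split.
      { intros. assert (INR (S m) * dl <= INR K * dl) by (apply INR_le_mul; [lia|lra]). lra. }
      split; [unfold K in Hm; lia|].
      split; [|split; [intros; lra| intros; exists m; auto]].
      intros e' He' j.
      rewrite (Qband lo hi dl m e') by (auto; lra).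
      rewrite (Qband lo hi dl m e) by (auto; lra).
      blk lo hi j.
      + destruct (Nat.ltb_spec (hi - j) m); destruct (Nat.eqb_spec (hi - j) m);
        destruct (Nat.eqb_spec j (hi - m)); try lia; ring.
      + destruct (Nat.eqb_spec j (hi - m)); try lia; ring.
    - exists 1, hi. split; [lra|]. split; [intros; lra|]. split; [lia|].
      split; [|split; [auto|intros; lra]].
      intros e' He' j. rewrite !Qsat by (auto; unfold K in *; lra).
      destruct (Nat.eqb_spec j hi); ring. }
  destruct HL as [etaL [aL [HL1 [HL2 [HL3 [HL4 HL5]]]]]].
  destruct HR as [etaR [aR [HR1 [HR2 [HR3 [HR4 [HR5 HR6]]]]]]].
  exists etaL, etaR, aL, aR. repeat split; try lia; try lra; auto.
  intros Hlt j Hj.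
  destruct (Rlt_dec (INR K * dl) e) as [Hgt|Hle].
  - rewrite (HL4 Hgt) in Hlt. lia.
  - destruct (Rlt_dec e (INR K * dl)) as [Hlt2|Hge].
    + destruct (HL5 ltac:(lra)) as [mL [? [? ?]]]. destruct (HR6 Hlt2) as [mR [? [? ?]]].
      subst aL aR. assert (mR < mL)%nat by lia.
      assert (INR (S mR) * dl <= INR mL * dl) by (apply INR_le_mul; [lia|lra]). lra.
    + assert (e = INR K * dl) by lra.
      rewrite !Qsat by (auto; unfold K in *; lra).
      destruct (Nat.eqb_spec j hi); destruct (Nat.eqb_spec lo hi);
      blk lo hi j; blk lo hi lo; try lia; unfold K in *; try lra.
Qed.

Definition Dx n (P : R -> nat -> R) s r := forall j, (j < n)%nat ->
  derivable_pt_lim (Defs.comp P j) s (if Nat.eqb j r then 1 else 0).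

Definition LSL n (I : R -> Prop) (P : R -> nat -> R) x := exists eta, 0 < eta /\ exists aL aR,
  (aL < n)%nat /\ (aR < n)%nat /\
  (forall y, I y -> x - eta < y <= x -> forall j, (j < n)%nat ->
      P y j = P x j + (if Nat.eqb j aL then y - x else 0)) /\
  (forall y, I y -> x <= y < x + eta -> forall j, (j < n)%nat ->
      P y j = P x j + (if Nat.eqb j aR then y - x else 0)) /\
  (forall y, I y -> 0 < Rabs (y - x) < eta -> Defs.interior I y) /\
  (Defs.interior I x -> (aL < aR)%nat -> forall j, (aL <= j <= aR)%nat -> P x j = P x aL).

Lemma ind_mul (b : bool) h : (if b then h else 0) = (if b then 1 else 0) * h.
Proof. destruct b; ring. Qed.

Lemma D1L n (I : R -> Prop) P x eta aL y :
  (forall y, I y -> x - eta < y <= x -> forall j, (j < n)%nat ->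
      P y j = P x j + (if Nat.eqb j aL then y - x else 0)) ->
  x - eta < y < x -> Defs.interior I y -> Dx n P y aL.
Proof.
  intros HL Hy [r [Hr Hint]] j Hj.
  set (rho := Rmin r (Rmin (y - (x - eta)) (x - y))).
  assert (Hrho: 0 < rho) by (unfold rho; repeat apply Rmin_glb_lt; lra).
  apply (dpl_affine_loc _ _ _ rho Hrho). intros h Hh. unfold Defs.comp.
  assert (Hh1: Rabs h < r) by (eapply Rlt_le_trans; [exact Hh|apply Rmin_l]).
  assert (Hh2: Rabs h < Rmin (y - (x - eta)) (x - y)) by (eapply Rlt_le_trans; [exact Hh|apply Rmin_r]).
  assert (Rmin (y - (x - eta)) (x - y) <= y - (x-eta)) by apply Rmin_l.
  assert (Rmin (y - (x - eta)) (x - y) <= x - y) by apply Rmin_r.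
  pose proof (Rle_abs h). pose proof (Rle_abs (-h)). rewrite Rabs_Ropp in H2.
  rewrite (HL (y+h)), (HL y); auto; try lra.
  - rewrite (ind_mul _ (y + h - x)), (ind_mul _ (y - x)). ring.
  - apply Hint. replace (y - y) with 0 by ring. rewrite Rabs_R0; auto.
  - apply Hint. replace (y + h - y) with h by ring. auto.
Qed.

Lemma D1R n (I : R -> Prop) P x eta aR y :
  (forall y, I y -> x <= y < x + eta -> forall j, (j < n)%nat ->
      P y j = P x j + (if Nat.eqb j aR then y - x else 0)) ->
  x < y < x + eta -> Defs.interior I y -> Dx n P y aR.
Proof.
  intros HL Hy [r [Hr Hint]] j Hj.
  set (rho := Rmin r (Rmin (x + eta - y) (y - x))).
  assert (Hrho: 0 < rho) by (unfold rho; repeat apply Rmin_glb_lt; lra).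
  apply (dpl_affine_loc _ _ _ rho Hrho). intros h Hh. unfold Defs.comp.
  assert (Hh1: Rabs h < r) by (eapply Rlt_le_trans; [exact Hh|apply Rmin_l]).
  assert (Hh2: Rabs h < Rmin (x + eta - y) (y - x)) by (eapply Rlt_le_trans; [exact Hh|apply Rmin_r]).
  assert (Rmin (x + eta - y) (y - x) <= x + eta - y) by apply Rmin_l.
  assert (Rmin (x + eta - y) (y - x) <= y - x) by apply Rmin_r.
  pose proof (Rle_abs h). pose proof (Rle_abs (-h)). rewrite Rabs_Ropp in H2.
  rewrite (HL (y+h)), (HL y); auto; try lra.
  - rewrite (ind_mul _ (y + h - x)), (ind_mul _ (y - x)). ring.
  - apply Hint. replace (y - y) with 0 by ring. rewrite Rabs_R0; auto.
  - apply Hint. replace (y + h - y) with h by ring. auto.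
Qed.

Lemma D2 n (I : R -> Prop) P x eta aL aR :
  0 < eta -> (aL < n)%nat -> (aR < n)%nat ->
  (forall y, I y -> x - eta < y <= x -> forall j, (j < n)%nat ->
      P y j = P x j + (if Nat.eqb j aL then y - x else 0)) ->
  (forall y, I y -> x <= y < x + eta -> forall j, (j < n)%nat ->
      P y j = P x j + (if Nat.eqb j aR then y - x else 0)) ->
  Defs.interior I x -> differentiable_at n P x -> aL = aR /\ Dx n P x aL.
Proof.
  intros Heta HaL HaR HL HR [r [Hr Hint]] Hd.
  assert (Hm: 0 < Rmin eta r) by (apply Rmin_glb_lt; auto).
  assert (Hm1: Rmin eta r <= eta) by apply Rmin_l.
  assert (Hm2: Rmin eta r <= r) by apply Rmin_r.
  assert (Hl: forall j, (j < n)%nat -> forall l, derivable_pt_lim (Defs.comp P j) x l ->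
     l = (if Nat.eqb j aL then 1 else 0) /\ l = (if Nat.eqb j aR then 1 else 0)).
  { intros j Hj l Hdl. split.
    - apply (dpl_left_unique _ _ _ _ (Rmin eta r) Hm Hdl). intros h Hh. unfold Defs.comp.
      rewrite (HL (x+h)); auto; try lra.
      + rewrite (ind_mul _ (x + h - x)). ring.
      + apply Hint. replace (x+h-x) with h by ring. rewrite Rabs_left; lra.
    - apply (dpl_right_unique _ _ _ _ (Rmin eta r) Hm Hdl). intros h Hh. unfold Defs.comp.
      rewrite (HR (x+h)); auto; try lra.
      + rewrite (ind_mul _ (x + h - x)). ring.
      + apply Hint. replace (x+h-x) with h by ring. rewrite Rabs_right; lra. }
  split.
  - destruct (Hd aL HaL) as [l Hdl]. destruct (Hl aL HaL l Hdl) as [E1 E2].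
    rewrite Nat.eqb_refl in E1. destruct (Nat.eqb_spec aL aR); auto. lra.
  - intros j Hj. destruct (Hd j Hj) as [l Hdl]. destruct (Hl j Hj l Hdl) as [E1 E2].
    rewrite <- E1. auto.
Qed.

Lemma abs_ind (b : bool) x : Rabs (if b then x else 0) <= Rabs x.
Proof. destruct b; [lra|]. rewrite Rabs_R0. apply Rabs_pos. Qed.

Lemma conn_right (Q : R -> nat -> Prop) a b t0 r0 :
  (forall s r r', Q s r -> Q s r' -> r = r') ->
  (forall t, a < t < b -> exists r eta, 0 < eta /\ forall s, a < s < b -> Rabs (s - t) < eta -> Q s r) ->
  a < t0 < b -> Q t0 r0 -> forall t, t0 <= t < b -> Q t r0.
Proof.
  intros Hu Hloc Ht0 HQ0 t Ht.
  set (E := fun x => t0 <= x <= t /\ forall y, t0 <= y <= x -> Q y r0).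
  assert (HE0: E t0). { split; [lra|]. intros y Hy. replace y with t0 by lra. auto. }
  destruct (completeness E) as [s [Hs1 Hs2]].
  { exists t. intros x [Hx _]. lra. }
  { exists t0. auto. }
  assert (Hst0: t0 <= s) by (apply Hs1; auto).
  assert (Hst: s <= t) by (apply Hs2; intros x [Hx _]; lra).
  destruct (Hloc s ltac:(lra)) as [r [eta [Heta Hq]]].
  assert (Hx: exists x, E x /\ s - eta < x).
  { apply NNPP. intros Hn. assert (s <= s - eta); [|lra]. apply Hs2. intros x Ex.
    apply Rnot_lt_le. intros Hlt. apply Hn. exists x. auto. }
  destruct Hx as [x [[Hx1 Hx2] Hx3]].
  assert (Hxs: x <= s) by (apply Hs1; split; auto).
  assert (Hr: r = r0).
  { apply (Hu x). apply Hq; try lra. rewrite Rabs_left1; lra. apply Hx2; lra. }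
  subst r.
  set (z := Rmin t (s + eta/2)).
  assert (Hz1: z <= t) by apply Rmin_l. assert (Hz2: z <= s + eta/2) by apply Rmin_r.
  assert (Hz3: z = t \/ z = s + eta / 2) by (unfold z, Rmin; destruct Rle_dec; auto).
  assert (HEz: E z).
  { split. split; [|auto]. destruct Hz3; lra.
    intros y Hy. destruct (Rle_dec y x); [apply Hx2; lra|].
    apply Hq. lra. unfold Rabs; destruct Rcase_abs; lra. }
  assert (z <= s) by (apply Hs1; auto).
  assert (z = t) by (destruct Hz3; lra).
  apply (proj2 HEz). lra.
Qed.

Lemma conn (Q : R -> nat -> Prop) a b t0 r0 :
  (forall s r r', Q s r -> Q s r' -> r = r') ->
  (forall t, a < t < b -> exists r eta, 0 < eta /\ forall s, a < s < b -> Rabs (s - t) < eta -> Q s r) ->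
  a < t0 < b -> Q t0 r0 -> forall t, a < t < b -> Q t r0.
Proof.
  intros Hu Hloc Ht0 HQ0 t Ht.
  destruct (Rle_dec t0 t).
  - apply (conn_right Q a b t0); auto. lra.
  - set (Q' := fun s r => Q (-s) r).
    assert (H: Q' (-t) r0).
    { apply (conn_right Q' (-b) (-a) (-t0)).
      - intros s r r'. unfold Q'. apply Hu.
      - intros t1 Ht1. destruct (Hloc (-t1) ltac:(lra)) as [r [eta [He Hq]]].
        exists r, eta. split; auto. intros s Hs Hst. unfold Q'. apply Hq. lra.
        replace (-s - - t1) with (-(s - t1)) by ring. rewrite Rabs_Ropp. auto.
      - lra.
      - unfold Q'. rewrite Ropp_involutive. auto.
      - lra. }
    unfold Q' in H. rewrite Ropp_involutive in H. auto.
Qed.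

Theorem lsl_nsystem n (I : R -> Prop) P : (1 <= n)%nat ->
  (forall x, I x -> LSL n I P x) -> cond1 n I P -> n_system n I P.
Proof.
  intros Hn HLSL Hc1.
  split; [split; [|split]|split; [auto|split]].
  -
    intros j x Hj Hx eps Heps. destruct (HLSL x Hx) as [eta [Heta [aL [aR [HaL [HaR [HL [HR _]]]]]]]].
    exists (Rmin eta eps). split; [apply Rmin_glb_lt; auto|]. intros y Hy Hyx.
    assert (Rabs (y - x) < eta) by (eapply Rlt_le_trans; [exact Hyx|apply Rmin_l]).
    assert (Rabs (y - x) < eps) by (eapply Rlt_le_trans; [exact Hyx|apply Rmin_r]).
    pose proof (Rle_abs (y - x)). pose proof (Rle_abs (-(y - x))). rewrite Rabs_Ropp in H2.
    destruct (Rle_dec y x).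
    + rewrite (HL y) by (auto; lra). replace (P x j + (if Nat.eqb j aL then y - x else 0) - P x j)
        with (if Nat.eqb j aL then y - x else 0) by ring. eapply Rle_lt_trans; [apply abs_ind|]. auto.
    + rewrite (HR y) by (auto; lra). replace (P x j + (if Nat.eqb j aR then y - x else 0) - P x j)
        with (if Nat.eqb j aR then y - x else 0) by ring. eapply Rle_lt_trans; [apply abs_ind|]. auto.
  -
    intros x Hx. destruct (HLSL x Hx) as [eta [Heta [aL [aR [HaL [HaR [HL [HR [Hint _]]]]]]]]].
    exists eta. split; auto. exists (x :: nil). intros y [Hy Hnd] Hyx.
    destruct (Req_dec y x) as [->|Hne]; [left; auto|]. exfalso.
    assert (Hyi: Defs.interior I y) by (apply Hint; auto; split; auto; apply Rabs_pos_lt; lra).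
    destruct Hnd as [Hnd|Hnd]; [auto|]. apply Hnd.
    pose proof (Rle_abs (y - x)). pose proof (Rle_abs (-(y - x))). rewrite Rabs_Ropp in H0.
    destruct (Rle_dec y x).
    + pose proof (D1L n I P x eta aL y HL ltac:(lra) Hyi) as HD. intros j Hj. eexists; apply HD; auto.
    + pose proof (D1R n I P x eta aR y HR ltac:(lra) Hyi) as HD. intros j Hj. eexists; apply HD; auto.
  -
    intros t Ht Hnd. assert (Hti: Defs.interior I t) by (apply NNPP; intros H; apply Hnd; split; auto).
    assert (Htd: differentiable_at n P t) by (apply NNPP; intros H; apply Hnd; split; auto).
    destruct (HLSL t Ht) as [eta [Heta [aL [aR [HaL [HaR [HL [HR [Hint _]]]]]]]]].
    destruct (D2 n I P t eta aL aR Heta HaL HaR HL HR Hti Htd) as [<- HDt].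
    exists eta. split; auto. exists (fun j => if Nat.eqb j aL then 1 else 0).
    intros s Hs Hnds Hst. assert (Hsi: Defs.interior I s) by (apply NNPP; intros H; apply Hnds; split; auto).
    pose proof (Rle_abs (s - t)). pose proof (Rle_abs (-(s - t))). rewrite Rabs_Ropp in H0.
    destruct (Rtotal_order s t) as [Hlt|[->|Hgt]].
    + apply (D1L n I P t eta aL s HL ltac:(lra) Hsi).
    + apply HDt.
    + apply (D1R n I P t eta aL s HR ltac:(lra) Hsi).
  -
    intros a b [Hab [HabI Habd]].
    set (Q := fun s r => (r < n)%nat /\ Dx n P s r).
    assert (Hu: forall s r r', Q s r -> Q s r' -> r = r').
    { intros s r r' [Hr Hd] [Hr' Hd']. pose proof (uniqueness_limite _ _ _ _ (Hd r Hr) (Hd' r Hr)) as E.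
      rewrite Nat.eqb_refl in E. destruct (Nat.eqb_spec r r'); auto. lra. }
    assert (Hintab: forall s, a < s < b -> Defs.interior I s).
    { intros s Hs. exists (Rmin (s - a) (b - s)). split; [apply Rmin_glb_lt; lra|].
      intros y Hy. apply HabI.
      assert (Rmin (s - a) (b - s) <= s - a) by apply Rmin_l.
      assert (Rmin (s - a) (b - s) <= b - s) by apply Rmin_r.
      pose proof (Rle_abs (y - s)). pose proof (Rle_abs (-(y - s))). rewrite Rabs_Ropp in H2. lra. }
    assert (Hloc: forall t, a < t < b -> exists r eta, 0 < eta /\ forall s, a < s < b -> Rabs (s - t) < eta -> Q s r).
    { intros t Ht. destruct (HLSL t (HabI t Ht)) as [eta [Heta [aL [aR [HaL [HaR [HL [HR [Hint _]]]]]]]]].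
      destruct (D2 n I P t eta aL aR Heta HaL HaR HL HR (Hintab t Ht) (Habd t Ht)) as [<- HDt].
      exists aL, eta. split; auto. intros s Hs Hst. split; auto.
      pose proof (Rle_abs (s - t)). pose proof (Rle_abs (-(s - t))). rewrite Rabs_Ropp in H0.
      destruct (Rtotal_order s t) as [Hlt|[->|Hgt]].
      + apply (D1L n I P t eta aL s HL ltac:(lra) (Hintab s Hs)).
      + apply HDt.
      + apply (D1R n I P t eta aL s HR ltac:(lra) (Hintab s Hs)). }
    destruct (Hloc ((a+b)/2) ltac:(lra)) as [r0 [eta0 [He0 Hq0]]].
    assert (HQ0: Q ((a+b)/2) r0) by (apply Hq0; [lra| replace ((a+b)/2 - (a+b)/2) with 0 by ring; rewrite Rabs_R0; auto]).
    exists r0. split; [apply HQ0|]. intros t Ht j Hj.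
    apply (conn Q a b ((a+b)/2) r0 Hu Hloc ltac:(lra) HQ0 t Ht); auto.
  -
    intros q Hq Hnd r s Hrs Hsn Hl Hr j Hj.
    destruct Hq as [rho [Hrho Hint0]].
    assert (Hq: Defs.interior I q) by (exists rho; auto).
    destruct (HLSL q (Hint0 q ltac:(replace (q-q) with 0 by ring; rewrite Rabs_R0; auto)))
      as [eta [Heta [aL [aR [HaL [HaR [HL [HR [Hint Hs3]]]]]]]]].
    assert (Hm: 0 < Rmin eta rho) by (apply Rmin_glb_lt; auto).
    assert (Hm1: Rmin eta rho <= eta) by apply Rmin_l.
    assert (Hm2: Rmin eta rho <= rho) by apply Rmin_r.
    assert (E1: 1 = if Nat.eqb r aL then 1 else 0).
    { apply (ld_unique _ _ _ _ (Rmin eta rho) Hm Hl). intros h Hh. unfold Defs.comp.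
      rewrite (HL (q+h)); try lia; try lra.
      + rewrite (ind_mul _ (q + h - q)). ring.
      + apply Hint0. replace (q+h-q) with h by ring. rewrite Rabs_left; lra. }
    assert (E2: 1 = if Nat.eqb s aR then 1 else 0).
    { apply (rd_unique _ _ _ _ (Rmin eta rho) Hm Hr). intros h Hh. unfold Defs.comp.
      rewrite (HR (q+h)); try lia; try lra.
      + rewrite (ind_mul _ (q + h - q)). ring.
      + apply Hint0. replace (q+h-q) with h by ring. rewrite Rabs_right; lra. }
    destruct (Nat.eqb_spec r aL); [|lra]. destruct (Nat.eqb_spec s aR); [|lra]. subst.
    apply Hs3; auto.
Qed.

Lemma listgap (L : list R) x : exists g, 0 < g /\ forall y, In y L -> y <> x -> g <= Rabs (y - x).
Proof.
  induction L as [|a L [g [Hg HL]]].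
  - exists 1. split; [lra|]. intros y [].
  - destruct (Req_dec a x) as [->|Hne].
    + exists g. split; auto. intros y [<-|Hy] Hyx; [congruence|]. auto.
    + exists (Rmin g (Rabs (a - x))). split.
      * apply Rmin_glb_lt; auto. apply Rabs_pos_lt. lra.
      * intros y [<-|Hy] Hyx; [apply Rmin_r|]. eapply Rle_trans; [apply Rmin_l|]. auto.
Qed.

Section Constr.
Variables (n : nat) (I : R -> Prop) (Pt : R -> nat -> R) (D : R -> Prop).
Hypothesis Hn : (2 <= n)%nat.
Hypothesis HI : good_interval I.
Hypothesis HG : gen_n_system n I Pt.
Hypothesis HDI : forall t, D t -> I t.
Hypothesis HDd : discrete_in I D.

Lemma Iint : is_interval I.
Proof. apply HI. Qed.
Lemma Pt_cont : continuous_on n I Pt.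
Proof. apply HG. Qed.
Lemma Pt_disc : discrete_in I (nondiff_set n I Pt).
Proof. apply HG. Qed.
Lemma Pt_c1 : cond1 n I Pt.
Proof. apply HG. Qed.

Definition J y := I y /\ (D y \/ nondiff_set n I Pt y).

Lemma J_I y : J y -> I y.
Proof. intros [H _]; auto. Qed.

Lemma J_disc : discrete_in I J.
Proof.
  intros x Hx. destruct (HDd x Hx) as [e1 [He1 [l1 Hl1]]].
  destruct (Pt_disc x Hx) as [e2 [He2 [l2 Hl2]]].
  exists (Rmin e1 e2). split; [apply Rmin_glb_lt; auto|]. exists (l1 ++ l2).
  intros y [Hy [Hd|Hd]] Hyx; apply in_or_app.
  - left. apply Hl1; auto. eapply Rlt_le_trans; [exact Hyx|apply Rmin_l].
  - right. apply Hl2; auto. eapply Rlt_le_trans; [exact Hyx|apply Rmin_r].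
Qed.

Lemma J_nonint y : I y -> ~ Defs.interior I y -> J y.
Proof. intros Hy Hn'. split; auto. right. split; auto. Qed.

Lemma notJ y : I y -> ~ J y -> Defs.interior I y /\ differentiable_at n Pt y.
Proof.
  intros Hy HJ. split; apply NNPP; intros H; apply HJ; split; auto; right; split; auto.
Qed.

Lemma noint_lower y : I y -> (forall z, I z -> y <= z) -> ~ Defs.interior I y.
Proof.
  intros Hy Hl [e [He Hi]]. assert (I (y - e/2)) by (apply Hi; replace (y - e/2 - y) with (-(e/2)) by ring;
    rewrite Rabs_Ropp, Rabs_right; lra). specialize (Hl _ H). lra.
Qed.

Lemma noint_upper y : I y -> (forall z, I z -> z <= y) -> ~ Defs.interior I y.
Proof.
  intros Hy Hl [e [He Hi]]. assert (I (y + e/2)) by (apply Hi; replace (y + e/2 - y) with (e/2) by ring;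
    rewrite Rabs_right; lra). specialize (Hl _ H). lra.
Qed.

Lemma isolate x : I x -> exists rho, 0 < rho /\ forall y, J y -> Rabs (y - x) < rho -> y = x.
Proof.
  intros Hx. destruct (J_disc x Hx) as [e [He [L HL]]]. destruct (listgap L x) as [g [Hg HLg]].
  exists (Rmin e g). split; [apply Rmin_glb_lt; auto|]. intros y Hy Hyx.
  destruct (Req_dec y x); auto. exfalso.
  assert (In y L) by (apply HL; auto; eapply Rlt_le_trans; [exact Hyx|apply Rmin_l]).
  specialize (HLg y H0 H). assert (Rmin e g <= g) by apply Rmin_r. lra.
Qed.

Definition LE t u := u < t /\ (forall y, u < y <= t -> I y /\ ~ J y) /\ (J u \/ ~ I u).
Definition RE t w := t < w /\ (forall y, t <= y < w -> I y /\ ~ J y) /\ (J w \/ ~ I w).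
Definition RInf t := forall y, t <= y -> I y /\ ~ J y.

Lemma LE_uniq t u1 u2 : LE t u1 -> LE t u2 -> u1 = u2.
Proof.
  intros [H1 [H2 H3]] [G1 [G2 G3]].
  destruct (Rtotal_order u1 u2) as [Hl|[He|Hg]]; auto; exfalso.
  - destruct (H2 u2 ltac:(lra)) as [Ha Hb]. destruct G3; auto.
  - destruct (G2 u1 ltac:(lra)) as [Ha Hb]. destruct H3; auto.
Qed.

Lemma RE_uniq t u1 u2 : RE t u1 -> RE t u2 -> u1 = u2.
Proof.
  intros [H1 [H2 H3]] [G1 [G2 G3]].
  destruct (Rtotal_order u1 u2) as [Hl|[He|Hg]]; auto; exfalso.
  - destruct (G2 u1 ltac:(lra)) as [Ha Hb]. destruct H3; auto.
  - destruct (H2 u2 ltac:(lra)) as [Ha Hb]. destruct G3; auto.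
Qed.

Lemma RE_RInf t w : RE t w -> RInf t -> False.
Proof.
  intros [H1 [H2 H3]] HR. destruct (HR w ltac:(lra)). destruct H3; auto.
Qed.

Lemma LE_ex t : I t -> ~ J t -> exists u, LE t u.
Proof.
  intros Ht HJt.
  destruct (classic (exists z, J z /\ z < t)) as [[z0 Hz0]|Hno].
  - set (E := fun z => J z /\ z < t).
    destruct (completeness E) as [s [Hs1 Hs2]].
    { exists t. intros z [_ Hz]. lra. }
    { exists z0. auto. }
    assert (Hst: s <= t) by (apply Hs2; intros z [_ Hz]; lra).
    assert (Hz0s: z0 <= s) by (apply Hs1; auto).
    assert (HIs: I s) by (apply (Iint z0 s t); auto; apply J_I; apply Hz0).
    destruct (isolate s HIs) as [rho [Hrho Hiso]].
    assert (Hx: exists z, E z /\ s - rho < z).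
    { apply NNPP. intros Hn'. assert (s <= s - rho); [|lra]. apply Hs2. intros z Ez.
      apply Rnot_lt_le. intros Hlt. apply Hn'. exists z. auto. }
    destruct Hx as [z [Ez Hz]]. assert (z <= s) by (apply Hs1; auto).
    assert (z = s). { apply Hiso. apply Ez. rewrite Rabs_left1; lra. }
    subst z. exists s. destruct Ez as [HJs Hslt]. split; auto. split; [|left; auto].
    intros y Hy. split. apply (Iint s y t); auto; lra.
    intros HJy. destruct (Req_dec y t) as [->|Hne]; auto.
    assert (y <= s) by (apply Hs1; split; auto; lra). lra.
  - set (E := fun z => I (-z)).
    destruct (completeness E) as [m [Hm1 Hm2]].
    { exists 0. intros z Hz. unfold E in Hz. destruct HI as [_ [H0 _]]. specialize (H0 _ Hz). lra. }
    { exists (-t). unfold E. rewrite Ropp_involutive. auto. }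
    assert (Hg1: forall y, I y -> -m <= y).
    { intros y Hy. assert (-y <= m) by (apply Hm1; unfold E; rewrite Ropp_involutive; auto). lra. }
    assert (Hg2: forall y, -m < y -> exists z, I z /\ z < y).
    { intros y Hy. apply NNPP. intros Hn'. assert (m <= -y); [|lra]. apply Hm2. intros z Hz.
      unfold E in Hz. apply Rnot_lt_le. intros Hlt. apply Hn'. exists (-z). split; auto. lra. }
    assert (Hgt: -m < t).
    { destruct (Rle_lt_or_eq_dec (-m) t (Hg1 t Ht)); auto. exfalso. apply HJt.
      apply J_nonint; auto. apply noint_lower; auto. intros z Hz. rewrite <- e. auto. }
    exists (-m). split; auto. split.
    + intros y Hy. destruct (Hg2 y ltac:(lra)) as [z [Hz1 Hz2]].
      split. apply (Iint z y t); auto; lra.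
      intros HJy. destruct (Req_dec y t) as [->|Hne]; auto. apply Hno. exists y. split; auto. lra.
    + destruct (classic (I (-m))) as [HIm|HIm]; [left|right; auto].
      apply J_nonint; auto. apply noint_lower; auto.
Qed.

Lemma RE_or t : I t -> ~ J t -> (exists w, RE t w) \/ RInf t.
Proof.
  intros Ht HJt.
  destruct (classic (exists z, J z /\ t < z)) as [[z0 Hz0]|Hno].
  - left. set (E := fun z => J (-z) /\ t < -z).
    destruct (completeness E) as [m [Hm1 Hm2]].
    { exists (-t). intros z [_ Hz]. lra. }
    { exists (-z0). unfold E. rewrite Ropp_involutive. auto. }
    assert (Hs1: forall z, J z -> t < z -> -m <= z).
    { intros z Hz1 Hz2. assert (-z <= m) by (apply Hm1; unfold E; rewrite Ropp_involutive; auto). lra. }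
    assert (Hs2: forall b, (forall z, J z -> t < z -> b <= z) -> b <= -m).
    { intros b Hb. assert (m <= -b); [|lra]. apply Hm2. intros z [Hz1 Hz2]. specialize (Hb _ Hz1 Hz2). lra. }
    set (s := -m) in *.
    assert (Hts: t <= s) by (apply Hs2; intros; lra).
    assert (Hsz0: s <= z0) by (apply Hs1; apply Hz0).
    assert (HIs: I s) by (apply (Iint t s z0); auto; apply J_I; apply Hz0).
    destruct (isolate s HIs) as [rho [Hrho Hiso]].
    assert (Hx: exists z, J z /\ t < z /\ z < s + rho).
    { apply NNPP. intros Hn'. assert (s + rho <= s); [|lra]. apply Hs2. intros z Hz1 Hz2.
      apply Rnot_lt_le. intros Hlt. apply Hn'. exists z. auto. }
    destruct Hx as [z [Hz1 [Hz2 Hz3]]]. assert (s <= z) by (apply Hs1; auto).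
    assert (z = s). { apply Hiso; auto. rewrite Rabs_right; lra. }
    subst z. exists s. split; [lra|]. split; [|left; auto].
    intros y Hy. split. apply (Iint t y s); auto; lra.
    intros HJy. destruct (Req_dec y t) as [->|Hne]; auto.
    assert (s <= y) by (apply Hs1; auto; lra). lra.
  - destruct (classic (exists M, forall y, I y -> y <= M)) as [[M HM]|HnM].
    + left. destruct (completeness I) as [b [Hb1 Hb2]].
      { exists M. intros y Hy. auto. }
      { exists t. auto. }
      assert (Htb: t <= b) by (apply Hb1; auto).
      assert (Htb': t < b).
      { destruct (Rle_lt_or_eq_dec t b Htb); auto. exfalso. apply HJt.
        apply J_nonint; auto. apply noint_upper; auto. intros z Hz. rewrite e. apply Hb1; auto. }
      exists b. split; auto. split.
      * intros y Hy. assert (Hz: exists z, I z /\ y < z).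
        { apply NNPP. intros Hn'. assert (b <= y); [|lra]. apply Hb2. intros z Hz.
          apply Rnot_lt_le. intros Hlt. apply Hn'. exists z; auto. }
        destruct Hz as [z [Hz1 Hz2]]. split. apply (Iint t y z); auto; lra.
        intros HJy. destruct (Req_dec y t) as [->|Hne]; auto. apply Hno. exists y. split; auto. lra.
      * destruct (classic (I b)) as [HIb|HIb]; [left|right; auto].
        apply J_nonint; auto. apply noint_upper; auto.
    + right. intros y Hy. assert (Hz: exists z, I z /\ y < z).
      { apply NNPP. intros Hn'. apply HnM. exists y. intros z Hz. apply Rnot_lt_le. intros Hlt.
        apply Hn'. exists z; auto. }
      destruct Hz as [z [Hz1 Hz2]]. split. apply (Iint t y z); auto; lra.
      intros HJy. destruct (Req_dec y t) as [->|Hne]; auto. apply Hno. exists y. split; auto. lra.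
Qed.


Definition uf t := epsilon (inhabits 0) (LE t).
Definition wf t := epsilon (inhabits 0) (RE t).
Definition wp t := if excluded_middle_informative (RInf t) then uf t + 1 else wf t.

Lemma uf_spec t : I t -> ~ J t -> LE t (uf t).
Proof. intros. unfold uf. apply epsilon_spec. apply LE_ex; auto. Qed.

Lemma wf_spec t : I t -> ~ J t -> ~ RInf t -> RE t (wf t).
Proof. intros H1 H2 H3. unfold wf. apply epsilon_spec. destruct (RE_or t H1 H2); tauto. Qed.

Definition InP t s := uf t < s /\ (RInf t \/ s < wf t).

Lemma InP_IJ t s : I t -> ~ J t -> InP t s -> I s /\ ~ J s.
Proof.
  intros Ht HJ [H1 H2]. destruct (uf_spec t Ht HJ) as [U1 [U2 U3]].
  destruct (Rle_dec s t). apply U2; lra.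
  destruct H2 as [HR|Hw]. apply HR; lra.
  destruct (classic (RInf t)) as [HR|HR]. apply HR; lra.
  destruct (wf_spec t Ht HJ HR) as [W1 [W2 W3]]. apply W2; lra.
Qed.

Lemma InP_self t : I t -> ~ J t -> InP t t.
Proof.
  intros Ht HJ. destruct (uf_spec t Ht HJ) as [U1 _]. split; auto.
  destruct (classic (RInf t)) as [HR|HR]; [left; auto|right].
  destruct (wf_spec t Ht HJ HR) as [W1 _]. auto.
Qed.

Lemma piece_eq t s : I t -> ~ J t -> InP t s ->
  uf s = uf t /\ (RInf s <-> RInf t) /\ (~ RInf t -> wf s = wf t).
Proof.
  intros Ht HJ Hs. destruct (InP_IJ t s Ht HJ Hs) as [HIs HJs].
  destruct Hs as [Hs1 Hs2].
  assert (Hin: forall y, uf t < y -> (RInf t \/ y < wf t) -> I y /\ ~ J y).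
  { intros y Hy1 Hy2. apply (InP_IJ t y Ht HJ). split; auto. }
  destruct (uf_spec t Ht HJ) as [U1 [U2 U3]].
  assert (E1: uf s = uf t).
  { apply (LE_uniq s); [apply uf_spec; auto|]. split; auto. split; auto.
    intros y Hy. apply Hin. lra. destruct Hs2; [left|right]; auto; lra. }
  assert (E2: RInf s <-> RInf t).
  { split.
    - intros HRs. apply NNPP. intros HRt. destruct (wf_spec t Ht HJ HRt) as [W1 [W2 W3]].
      destruct Hs2 as [|Hw]; [tauto|]. destruct (HRs (wf t) ltac:(lra)). destruct W3; auto.
    - intros HRt y Hy. apply Hin. lra. left; auto. }
  split; auto. split; auto. intros HRt.
  destruct (wf_spec t Ht HJ HRt) as [W1 [W2 W3]].
  destruct Hs2 as [|Hw]; [tauto|].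
  apply (RE_uniq s); [apply wf_spec; auto; tauto|]. split; auto. split; auto.
  intros y Hy. apply Hin. lra. right; lra.
Qed.

Lemma wp_eq t s : I t -> ~ J t -> InP t s -> wp s = wp t.
Proof.
  intros Ht HJ Hs. destruct (piece_eq t s Ht HJ Hs) as [E1 [E2 E3]].
  unfold wp. destruct (excluded_middle_informative (RInf s)); destruct (excluded_middle_informative (RInf t));
    try tauto. rewrite E1; auto.
Qed.

Definition BP a b (p : nat * nat) := (fst p <= snd p)%nat /\ (snd p < n)%nat /\
  forall s, a < s < b ->
    (forall j, (fst p <= j <= snd p)%nat -> Pt s j = Pt s (fst p)) /\
    (forall j, (j < n)%nat -> derivable_pt_lim (Defs.comp Pt j) s (block_slope (fst p) (snd p) j)).

Definition bk t := epsilon (inhabits (0%nat, 0%nat)) (BP (uf t) (wp t)).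
Definition lo t := fst (bk t).
Definition hi t := snd (bk t).
Definition sg t j := block_slope (lo t) (hi t) j.
Definition kk t := INR (hi t - lo t + 1).
Definition dl t := if excluded_middle_informative (RInf t) then 1 else (wf t - uf t) / kk t.

Lemma InP_diff t a b : I t -> ~ J t -> a < b -> (forall s, a < s < b -> InP t s) ->
  diff_subinterval n I Pt a b.
Proof.
  intros Ht HJ Hab Hs. split; auto. split.
  - intros s H. apply (InP_IJ t s Ht HJ (Hs s H)).
  - intros s H. destruct (InP_IJ t s Ht HJ (Hs s H)). apply notJ; auto.
Qed.

Lemma wp_gt t : I t -> ~ J t -> uf t < wp t /\ forall s, uf t < s < wp t -> InP t s.
Proof.
  intros Ht HJ. destruct (uf_spec t Ht HJ) as [U1 _]. unfold wp.
  destruct (excluded_middle_informative (RInf t)) as [HR|HR].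
  - split; [lra|]. intros s Hs. split; [lra|left; auto].
  - destruct (wf_spec t Ht HJ HR) as [W1 _]. split; [lra|]. intros s Hs. split; [lra|right; lra].
Qed.

Lemma bk_spec t : I t -> ~ J t -> BP (uf t) (wp t) (bk t).
Proof.
  intros Ht HJ. unfold bk. apply epsilon_spec. destruct (wp_gt t Ht HJ) as [H1 H2].
  destruct HG as [_ [_ [G2 _]]].
  destruct (G2 (uf t) (wp t) (InP_diff t _ _ Ht HJ H1 H2)) as [l [h [Hlh [Hh Hd]]]].
  exists (l, h). split; auto.
Qed.

Lemma bk_bounds t : I t -> ~ J t -> (lo t <= hi t)%nat /\ (hi t < n)%nat.
Proof. intros Ht HJ. destruct (bk_spec t Ht HJ) as [H1 [H2 _]]. split; auto. Qed.

Lemma kk_ge1 t : 1 <= kk t.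
Proof.
  unfold kk. replace (hi t - lo t + 1)%nat with (S (hi t - lo t)) by lia. rewrite S_INR.
  pose proof (pos_INR (hi t - lo t)). lra.
Qed.

Lemma sg_in t j : (lo t <= j <= hi t)%nat -> sg t j = 1 / kk t.
Proof. intros H. unfold sg, block_slope, kk. apply in_block_iff in H. rewrite H. auto. Qed.

Lemma sg_out t j : ~ (lo t <= j <= hi t)%nat -> sg t j = 0.
Proof. intros H. unfold sg, block_slope. apply in_block_false in H. rewrite H. auto. Qed.

Lemma dl_pos t : I t -> ~ J t -> 0 < dl t.
Proof.
  intros Ht HJ. unfold dl. destruct (excluded_middle_informative (RInf t)) as [HR|HR]; [lra|].
  destruct (uf_spec t Ht HJ) as [U1 _]. destruct (wf_spec t Ht HJ HR) as [W1 _].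
  pose proof (kk_ge1 t). apply Rdiv_lt_0_compat; lra.
Qed.

Lemma dl_fin t : ~ RInf t -> kk t * dl t = wf t - uf t.
Proof.
  intros HR. unfold dl. destruct (excluded_middle_informative (RInf t)) as [|_]; [tauto|].
  pose proof (kk_ge1 t). field. lra.
Qed.

Lemma piece_data t s : I t -> ~ J t -> InP t s ->
  uf s = uf t /\ lo s = lo t /\ hi s = hi t /\ dl s = dl t /\ (forall j, sg s j = sg t j) /\ kk s = kk t.
Proof.
  intros Ht HJ Hs. destruct (piece_eq t s Ht HJ Hs) as [E1 [E2 E3]].
  assert (Eb: bk s = bk t) by (unfold bk; rewrite (wp_eq t s Ht HJ Hs), E1; auto).
  assert (El: lo s = lo t) by (unfold lo; rewrite Eb; auto).
  assert (Eh: hi s = hi t) by (unfold hi; rewrite Eb; auto).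
  assert (Ek: kk s = kk t) by (unfold kk; rewrite El, Eh; auto).
  split; auto. split; auto. split; auto. split.
  - unfold dl. destruct (excluded_middle_informative (RInf s)); destruct (excluded_middle_informative (RInf t));
      try tauto. rewrite E3, E1, Ek; auto.
  - split; auto. intros j. unfold sg. rewrite El, Eh. auto.
Qed.

Lemma sg_deriv t s : I t -> ~ J t -> InP t s -> forall j, (j < n)%nat ->
  derivable_pt_lim (Defs.comp Pt j) s (sg t j).
Proof.
  intros Ht HJ Hs j Hj. destruct (wp_gt t Ht HJ) as [Hw1 Hw2].
  destruct (bk_spec t Ht HJ) as [B1 [B2 B3]].
  destruct (classic (RInf t)) as [HR|HR].
  - destruct HG as [_ [_ [G2 _]]].
    assert (Hsu: uf t < s) by apply Hs.
    destruct (G2 (uf t) (s + 1)) as [l' [h' [_ [_ Hd']]]].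
    { apply (InP_diff t); auto. lra. intros r Hr. split; [lra|left; auto]. }
    set (m := uf t + 1/2).
    assert (Hm: uf t < m < wp t).
    { unfold wp in *. destruct (excluded_middle_informative (RInf t)); [unfold m; lra|tauto]. }
    pose proof (proj2 (B3 m Hm) j Hj) as D1.
    pose proof (proj2 (Hd' m ltac:(unfold m; lra)) j Hj) as D2.
    pose proof (uniqueness_limite _ _ _ _ D1 D2) as Eq.
    pose proof (proj2 (Hd' s ltac:(lra)) j Hj) as D3.
    unfold sg, lo, hi. rewrite Eq. auto.
  - assert (Hs': uf t < s < wp t).
    { unfold wp. destruct (excluded_middle_informative (RInf t)); [tauto|]. destruct Hs as [? [|]]; [tauto|]. lra. }
    apply (proj2 (B3 s Hs') j Hj).
Qed.

Lemma Pt_aff t s s' j : I t -> ~ J t -> InP t s -> InP t s' -> (j < n)%nat ->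
  Pt s' j - Pt s j = sg t j * (s' - s).
Proof.
  intros Ht HJ Hs Hs' Hj.
  assert (Hmid: forall a b, InP t a -> InP t b -> a < b -> Pt b j - Pt a j = sg t j * (b - a)).
  { intros a b Ha Hb Hab.
    destruct (MVT_cor2 (Defs.comp Pt j) (fun _ => sg t j) a b Hab) as [c [Hc _]].
    - intros c Hc. apply sg_deriv; auto. destruct Ha as [Ha1 Ha2]. destruct Hb as [Hb1 Hb2].
      split; [lra|]. destruct Hb2; [left; auto|right; lra].
    - unfold Defs.comp in Hc. auto. }
  destruct (Rtotal_order s s') as [Hl|[He|Hg]].
  - apply Hmid; auto.
  - subst. ring.
  - rewrite <- (Ropp_involutive (Pt s' j - Pt s j)). rewrite Ropp_minus_distr. rewrite Hmid; auto. ring.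
Qed.

Definition Bv t j := Pt t j - sg t j * (t - uf t).

Lemma Pt_in t s j : I t -> ~ J t -> InP t s -> (j < n)%nat -> Pt s j = Bv t j + sg t j * (s - uf t).
Proof.
  intros Ht HJ Hs Hj. pose proof (Pt_aff t t s j Ht HJ (InP_self t Ht HJ) Hs Hj). unfold Bv. lra.
Qed.

Lemma Pt_lend t j : I t -> ~ J t -> I (uf t) -> (j < n)%nat -> Pt (uf t) j = Bv t j.
Proof.
  intros Ht HJ Hu Hj. destruct (uf_spec t Ht HJ) as [U1 _].
  apply (lim_aff (fun y => Pt y j) (uf t) (Bv t j) (sg t j) I).
  - intros eps Heps. apply (Pt_cont j (uf t) Hj Hu eps Heps).
  - intros h Hh. set (y := uf t + Rmin h (t - uf t) / 2).
    assert (0 < Rmin h (t - uf t)) by (apply Rmin_glb_lt; lra).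
    assert (Rmin h (t - uf t) <= h) by apply Rmin_l. assert (Rmin h (t - uf t) <= t - uf t) by apply Rmin_r.
    assert (Hy: InP t y). { split. unfold y; lra. destruct (InP_self t Ht HJ) as [_ [|]]; [left; auto|right; unfold y; lra]. }
    exists y. split. unfold y. replace (uf t + Rmin h (t - uf t) / 2 - uf t) with (Rmin h (t - uf t) / 2) by ring.
    rewrite Rabs_right; lra.
    split. apply (InP_IJ t y Ht HJ Hy). apply Pt_in; auto.
Qed.

Lemma Pt_rend t j : I t -> ~ J t -> ~ RInf t -> I (wf t) -> (j < n)%nat ->
  Pt (wf t) j = Bv t j + sg t j * (wf t - uf t).
Proof.
  intros Ht HJ HR Hw Hj. destruct (wf_spec t Ht HJ HR) as [W1 _]. destruct (uf_spec t Ht HJ) as [U1 _].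
  apply (lim_aff (fun y => Pt y j) (wf t) _ (sg t j) I).
  - intros eps Heps. apply (Pt_cont j (wf t) Hj Hw eps Heps).
  - intros h Hh. set (y := wf t - Rmin h (wf t - t) / 2).
    assert (0 < Rmin h (wf t - t)) by (apply Rmin_glb_lt; lra).
    assert (Rmin h (wf t - t) <= h) by apply Rmin_l. assert (Rmin h (wf t - t) <= wf t - t) by apply Rmin_r.
    assert (Hy: InP t y). { split; unfold y. lra. right; lra. }
    exists y. split. unfold y. replace (wf t - Rmin h (wf t - t) / 2 - wf t) with (- (Rmin h (wf t - t) / 2)) by ring.
    rewrite Rabs_Ropp, Rabs_right; lra.
    split. apply (InP_IJ t y Ht HJ Hy). rewrite (Pt_in t y j); auto. ring.
Qed.

Lemma Pt_closed t s j : I t -> ~ J t -> I s -> uf t <= s -> (RInf t \/ s <= wf t) -> (j < n)%nat ->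
  Pt s j = Bv t j + sg t j * (s - uf t).
Proof.
  intros Ht HJ Hs H1 H2 Hj.
  destruct (Rle_lt_or_eq_dec _ _ H1) as [H1'|H1'].
  - destruct (classic (RInf t)) as [HR|HR].
    + apply Pt_in; auto. split; auto.
    + destruct H2 as [|H2]; [tauto|].
      destruct (Rle_lt_or_eq_dec _ _ H2) as [H2'|H2'].
      * apply Pt_in; auto. split; auto.
      * subst s. apply Pt_rend; auto.
  - subst s. rewrite Pt_lend; auto. ring.
Qed.

Lemma B_block t j : I t -> ~ J t -> (lo t <= j <= hi t)%nat -> Bv t j = Bv t (lo t).
Proof.
  intros Ht HJ Hj. destruct (wp_gt t Ht HJ) as [Hw1 Hw2]. destruct (bk_spec t Ht HJ) as [B1 [B2 B3]].
  set (m := (uf t + wp t) / 2). assert (Hm: uf t < m < wp t) by (unfold m; lra).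
  destruct (B3 m Hm) as [Beq _]. fold (lo t) (hi t) in Beq. specialize (Beq j Hj).
  unfold lo, hi in *.
  pose proof (Pt_in t m j Ht HJ (Hw2 m Hm) ltac:(lia)) as P1.
  pose proof (Pt_in t m (fst (bk t)) Ht HJ (Hw2 m Hm) ltac:(lia)) as P2.
  rewrite (sg_in t j) in P1 by auto. rewrite (sg_in t (fst (bk t))) in P2 by (unfold lo, hi; lia).
  lra.
Qed.

Lemma B_order t j : I t -> ~ J t -> (S j < n)%nat -> Bv t j <= Bv t (S j).
Proof.
  intros Ht HJ Hj. destruct (InP_self t Ht HJ) as [Hs1 Hs2].
  apply (lim_le _ _ (sg t j) (sg t (S j)) (t - uf t)); [lra|].
  intros h Hh. assert (Hy: InP t (uf t + h)) by (split; [lra|destruct Hs2; [left|right]; auto; lra]).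
  replace (Bv t j + sg t j * h) with (Pt (uf t + h) j) by (rewrite (Pt_in t _ j) by (auto; lia); f_equal; ring).
  replace (Bv t (S j) + sg t (S j) * h) with (Pt (uf t + h) (S j)) by (rewrite (Pt_in t _ (S j)) by (auto; lia); f_equal; ring).
  destruct Pt_c1 with (q := uf t + h) as [_ [Ho _]]. apply (InP_IJ t _ Ht HJ Hy). apply Ho; auto.
Qed.

Lemma B_nonneg t : I t -> ~ J t -> 0 <= Bv t 0.
Proof.
  intros Ht HJ. destruct (InP_self t Ht HJ) as [Hs1 Hs2].
  apply (lim_le _ _ 0 (sg t 0) (t - uf t)); [lra|].
  intros h Hh. assert (Hy: InP t (uf t + h)) by (split; [lra|destruct Hs2; [left|right]; auto; lra]).
  replace (Bv t 0 + sg t 0 * h) with (Pt (uf t + h) 0) by (rewrite (Pt_in t _ 0) by (auto; lia); f_equal; ring).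
  destruct Pt_c1 with (q := uf t + h) as [H0 _]. apply (InP_IJ t _ Ht HJ Hy). lra.
Qed.

Lemma B_top t j : I t -> ~ J t -> ~ RInf t -> (S j < n)%nat ->
  Bv t j + sg t j * (wf t - uf t) <= Bv t (S j) + sg t (S j) * (wf t - uf t).
Proof.
  intros Ht HJ HR Hj. destruct (InP_self t Ht HJ) as [Hs1 Hs2]. destruct (wf_spec t Ht HJ HR) as [W1 _].
  apply (lim_le _ _ (- sg t j) (- sg t (S j)) (wf t - t)); [lra|].
  intros h Hh. assert (Hy: InP t (wf t - h)) by (split; [lra|right; lra]).
  replace (Bv t j + sg t j * (wf t - uf t) + - sg t j * h) with (Pt (wf t - h) j) by (rewrite (Pt_in t _ j) by (auto; lia); ring).
  replace (Bv t (S j) + sg t (S j) * (wf t - uf t) + - sg t (S j) * h) with (Pt (wf t - h) (S j)) by (rewrite (Pt_in t _ (S j)) by (auto; lia); ring).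
  destruct Pt_c1 with (q := wf t - h) as [_ [Ho _]]. apply (InP_IJ t _ Ht HJ Hy). apply Ho; auto.
Qed.

Lemma hi_inf t : I t -> ~ J t -> RInf t -> ~ (S (hi t) < n)%nat.
Proof.
  intros Ht HJ HR Hlt. destruct (bk_bounds t Ht HJ) as [Hb1 Hb2].
  destruct (InP_self t Ht HJ) as [Hs1 _].
  pose proof (kk_ge1 t) as Hk.
  set (Dl := Rabs (Bv t (S (hi t)) - Bv t (hi t)) + 1).
  set (s := t + kk t * Dl).
  assert (HDl: 1 <= Dl) by (unfold Dl; pose proof (Rabs_pos (Bv t (S (hi t)) - Bv t (hi t))); lra).
  assert (Hs: InP t s) by (split; [unfold s; nra| left; auto]).
  destruct Pt_c1 with (q := s) as [_ [Ho _]]. apply (InP_IJ t _ Ht HJ Hs).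
  specialize (Ho (hi t) Hlt).
  rewrite (Pt_in t s (hi t)), (Pt_in t s (S (hi t))) in Ho by (auto; lia).
  rewrite (sg_in t (hi t)) in Ho by lia. rewrite (sg_out t (S (hi t))) in Ho by lia.
  assert (1 / kk t * (s - uf t) = (t - uf t) / kk t + Dl) by (unfold s; field; lra).
  assert (0 <= (t - uf t) / kk t) by (apply Rdiv_le_0_compat || (unfold Rdiv; apply Rmult_le_pos; [lra|left; apply Rinv_0_lt_compat; lra])).
  pose proof (Rle_abs (Bv t (S (hi t)) - Bv t (hi t))). unfold Dl in *. lra.
Qed.

Definition corr t j := - sg t j * (t - uf t) + Qf (lo t) (hi t) (dl t) (t - uf t) j.
Definition Pn t j := if excluded_middle_informative (J t) then Pt t j else Pt t j + corr t j.

Lemma Pn_J t j : J t -> Pn t j = Pt t j.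
Proof. intros H. unfold Pn. destruct (excluded_middle_informative (J t)); tauto. Qed.

Lemma Pn_nJ t j : ~ J t -> Pn t j = Pt t j + corr t j.
Proof. intros H. unfold Pn. destruct (excluded_middle_informative (J t)); tauto. Qed.

Lemma Pn_in t s j : I t -> ~ J t -> InP t s -> (j < n)%nat ->
  Pn s j = Bv t j + Qf (lo t) (hi t) (dl t) (s - uf t) j.
Proof.
  intros Ht HJ Hs Hj. destruct (InP_IJ t s Ht HJ Hs) as [HIs HJs].
  destruct (piece_data t s Ht HJ Hs) as [E1 [E2 [E3 [E4 [E5 E6]]]]].
  rewrite Pn_nJ by auto. unfold corr. rewrite E1, E2, E3, E4, E5.
  rewrite (Pt_in t s j) by auto. ring.
Qed.

Lemma QKdl t j : I t -> ~ J t -> Qf (lo t) (hi t) (dl t) (kk t * dl t) j = sg t j * (kk t * dl t).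
Proof.
  intros Ht HJ. destruct (bk_bounds t Ht HJ). pose proof (dl_pos t Ht HJ). pose proof (kk_ge1 t).
  rewrite QLk by (auto; unfold kk in *; nra). unfold sg, block_slope. fold (kk t).
  destruct (in_block (lo t) (hi t) j); destruct (Nat.eqb j (lo t)); unfold kk; field; fold (kk t); lra.
Qed.

Lemma Pn_closed t s j : I t -> ~ J t -> I s -> uf t <= s -> (RInf t \/ s <= wf t) -> (j < n)%nat ->
  Pn s j = Bv t j + Qf (lo t) (hi t) (dl t) (s - uf t) j.
Proof.
  intros Ht HJ Hs H1 H2 Hj.
  destruct (Rle_lt_or_eq_dec _ _ H1) as [H1'|H1'].
  - destruct (classic (RInf t)) as [HR|HR].
    + apply Pn_in; auto. split; auto.
    + destruct H2 as [|H2]; [tauto|].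
      destruct (Rle_lt_or_eq_dec _ _ H2) as [H2'|H2'].
      * apply Pn_in; auto. split; auto.
      * subst s. destruct (wf_spec t Ht HJ HR) as [_ [_ [W3|W3]]]; [|tauto].
        rewrite Pn_J by auto. rewrite Pt_rend by auto. rewrite <- dl_fin by auto.
        rewrite QKdl by auto. ring.
  - subst s. destruct (uf_spec t Ht HJ) as [_ [_ [U3|U3]]]; [|tauto].
    rewrite Pn_J by auto. rewrite Pt_lend by auto. replace (uf t - uf t) with 0 by ring.
    rewrite Qf_0. ring. left; apply dl_pos; auto.
Qed.

Lemma LSL_notJ x : I x -> ~ J x -> LSL n I Pn x.
Proof.
  intros Hx HJ. destruct (bk_bounds x Hx HJ) as [Hb1 Hb2]. pose proof (dl_pos x Hx HJ) as Hdl.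
  destruct (InP_self x Hx HJ) as [Hu Hw].
  destruct (QLR (lo x) (hi x) (dl x) (x - uf x) Hb1 Hdl ltac:(lra))
    as [etaL [etaR [aL [aR [HeL [HeR [Hfin [HaL [HaR [QL [QR QS]]]]]]]]]]].
  exists (Rmin etaL etaR). assert (Hm: 0 < Rmin etaL etaR) by (apply Rmin_glb_lt; lra).
  assert (Hm1: Rmin etaL etaR <= etaL) by apply Rmin_l. assert (Hm2: Rmin etaL etaR <= etaR) by apply Rmin_r.
  assert (Hin: forall y, x - Rmin etaL etaR < y < x + Rmin etaL etaR -> InP x y).
  { intros y Hy. split; [lra|]. destruct (classic (RInf x)) as [HR|HR]; [left; auto|right].
    destruct Hw as [|Hw]; [tauto|].
    destruct (Rle_dec y x); [lra|].
    pose proof (dl_fin x HR). unfold kk in H. specialize (Hfin ltac:(lra)). lra. }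
  split; auto. exists aL, aR. split; [lia|]. split; [lia|]. split; [|split; [|split]].
  - intros y Hy Hyx j Hj. destruct (Req_dec y x) as [->|Hne]; [destruct (Nat.eqb j aL); ring|].
    rewrite (Pn_in x y j), (Pn_in x x j) by (auto; try apply InP_self; auto; apply Hin; lra).
    rewrite (QL (y - uf x)) by lra. replace (y - uf x - (x - uf x)) with (y - x) by ring. ring.
  - intros y Hy Hyx j Hj. destruct (Req_dec y x) as [->|Hne]; [destruct (Nat.eqb j aR); ring|].
    rewrite (Pn_in x y j), (Pn_in x x j) by (auto; try apply InP_self; auto; apply Hin; lra).
    rewrite (QR (y - uf x)) by lra. replace (y - uf x - (x - uf x)) with (y - x) by ring. ring.
  - intros y Hy Hyx. assert (InP x y).
    { apply Hin. pose proof (Rle_abs (y - x)). pose proof (Rle_abs (-(y - x))). rewrite Rabs_Ropp in H0. lra. }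
    destruct (InP_IJ x y Hx HJ H). apply notJ; auto.
  - intros _ Hlt j Hj.
    rewrite (Pn_in x x j), (Pn_in x x aL) by (auto; try apply InP_self; auto; lia).
    rewrite (QS Hlt j), (QS Hlt aL) by lia.
    rewrite (B_block x j), (B_block x aL) by (auto; lia). auto.
Qed.

Lemma left_piece x : J x -> (exists y0, I y0 /\ y0 < x) ->
  exists t, I t /\ ~ J t /\ t < x /\ ~ RInf t /\ wf t = x.
Proof.
  intros HJx [y0 [Hy0 Hy0x]]. pose proof (J_I x HJx) as Hx.
  destruct (isolate x Hx) as [rho [Hrho Hiso]].
  set (t := Rmax y0 (x - rho/2)).
  assert (Ht1: y0 <= t) by apply Rmax_l. assert (Ht2: x - rho/2 <= t) by apply Rmax_r.
  assert (Ht3: t < x) by (unfold t, Rmax; destruct Rle_dec; lra).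
  assert (HIt: I t) by (apply (Iint y0 t x); auto; lra).
  assert (HJt: ~ J t). { intros HJt. assert (t = x) by (apply Hiso; auto; rewrite Rabs_left; lra). lra. }
  assert (HR: ~ RInf t). { intros HR. destruct (HR x ltac:(lra)). tauto. }
  exists t. split; auto. split; auto. split; auto. split; auto.
  destruct (wf_spec t HIt HJt HR) as [W1 [W2 W3]].
  destruct (Rtotal_order (wf t) x) as [Hl|[He|Hg]]; auto; exfalso.
  - assert (I (wf t)) by (apply (Iint t (wf t) x); auto; lra).
    destruct W3 as [W3|W3]; [|tauto].
    assert (wf t = x) by (apply Hiso; auto; rewrite Rabs_left; lra). lra.
  - destruct (W2 x ltac:(lra)). tauto.
Qed.

Lemma right_piece x : J x -> (exists y1, I y1 /\ x < y1) ->
  exists t, I t /\ ~ J t /\ x < t /\ uf t = x.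
Proof.
  intros HJx [y1 [Hy1 Hy1x]]. pose proof (J_I x HJx) as Hx.
  destruct (isolate x Hx) as [rho [Hrho Hiso]].
  set (t := Rmin y1 (x + rho/2)).
  assert (Ht1: t <= y1) by apply Rmin_l. assert (Ht2: t <= x + rho/2) by apply Rmin_r.
  assert (Ht3: x < t) by (unfold t, Rmin; destruct Rle_dec; lra).
  assert (HIt: I t) by (apply (Iint x t y1); auto; lra).
  assert (HJt: ~ J t). { intros HJt. assert (t = x) by (apply Hiso; auto; rewrite Rabs_right; lra). lra. }
  exists t. split; auto. split; auto. split; auto.
  destruct (uf_spec t HIt HJt) as [U1 [U2 U3]].
  destruct (Rtotal_order (uf t) x) as [Hl|[He|Hg]]; auto; exfalso.
  - destruct (U2 x ltac:(lra)). tauto.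
  - assert (I (uf t)) by (apply (Iint x (uf t) t); auto; lra).
    destruct U3 as [U3|U3]; [|tauto].
    assert (uf t = x) by (apply Hiso; auto; rewrite Rabs_right; lra). lra.
Qed.

Lemma left_clause x t : J x -> I t -> ~ J t -> t < x -> ~ RInf t -> wf t = x ->
  forall y, I y -> x - dl t < y <= x -> forall j, (j < n)%nat ->
  Pn y j = Pn x j + (if Nat.eqb j (lo t) then y - x else 0).
Proof.
  intros HJx Ht HJt Htx HR Hw y Hy Hyx j Hj.
  destruct (Req_dec y x) as [->|Hne]; [destruct (Nat.eqb j (lo t)); ring|].
  pose proof (dl_fin t HR) as Hf. pose proof (kk_ge1 t). pose proof (dl_pos t Ht HJt).
  destruct (bk_bounds t Ht HJt).
  assert (Hin: InP t y) by (split; [nra|right; lra]).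
  rewrite (Pn_in t y j) by auto. rewrite Pn_J by auto.
  rewrite <- Hw. rewrite Pt_rend by (auto; rewrite Hw; apply J_I; auto).
  rewrite <- Hf. rewrite <- QKdl by auto.
  rewrite !QLk by (auto; unfold kk in *; nra).
  replace (y - uf t) with (kk t * dl t + (y - wf t)) by lra. unfold kk. rewrite Hw.
  destruct (in_block (lo t) (hi t) j); destruct (Nat.eqb j (lo t)); ring.
Qed.

Lemma right_clause x t : J x -> I t -> ~ J t -> x < t -> uf t = x ->
  forall y, I y -> x <= y < x + dl t -> forall j, (j < n)%nat ->
  Pn y j = Pn x j + (if Nat.eqb j (hi t) then y - x else 0).
Proof.
  intros HJx Ht HJt Htx Hu y Hy Hyx j Hj.
  destruct (Req_dec y x) as [->|Hne]; [destruct (Nat.eqb j (hi t)); ring|].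
  pose proof (kk_ge1 t). pose proof (dl_pos t Ht HJt).
  destruct (bk_bounds t Ht HJt).
  assert (Hin: InP t y).
  { split; [lra|]. destruct (classic (RInf t)) as [HR|HR]; [left; auto|right].
    pose proof (dl_fin t HR). nra. }
  rewrite (Pn_in t y j) by auto. rewrite Pn_J by auto.
  replace (Pt x j) with (Pt (uf t) j) by (rewrite Hu; auto).
  rewrite Pt_lend by (auto; rewrite Hu; apply J_I; auto).
  rewrite QR0 by (auto; lra). rewrite Hu. destruct (Nat.eqb j (hi t)); ring.
Qed.

Lemma S3_J x tL tR : J x -> Defs.interior I x ->
  I tL -> ~ J tL -> tL < x -> ~ RInf tL -> wf tL = x ->
  I tR -> ~ J tR -> x < tR -> uf tR = x ->
  (lo tL < hi tR)%nat -> forall j, (lo tL <= j <= hi tR)%nat -> Pt x j = Pt x (lo tL).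
Proof.
  intros HJx Hint HtL HJL HLx HR Hw HtR HJR HRx Hu Hlt j Hj.
  pose proof (J_I x HJx) as Hx.
  destruct (bk_bounds tL HtL HJL) as [BL1 BL2]. destruct (bk_bounds tR HtR HJR) as [BR1 BR2].
  pose proof (dl_pos tL HtL HJL) as HdL. pose proof (dl_pos tR HtR HJR) as HdR.
  pose proof (kk_ge1 tL). pose proof (kk_ge1 tR). pose proof (dl_fin tL HR) as HfL.
  assert (AffL: forall i, (i < n)%nat -> forall h, - dl tL < h < 0 -> Pt (x + h) i - Pt x i = sg tL i * h).
  { intros i Hi h Hh. assert (Hin: InP tL (x + h)) by (split; [nra|right; lra]).
    rewrite (Pt_in tL (x+h) i) by auto. replace (Pt x i) with (Pt (wf tL) i) by (rewrite Hw; auto).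
    rewrite Pt_rend by (auto; rewrite Hw; auto).
    rewrite Hw. ring. }
  assert (AffR: forall i, (i < n)%nat -> forall h, 0 < h < dl tR -> Pt (x + h) i - Pt x i = sg tR i * h).
  { intros i Hi h Hh. assert (Hin: InP tR (x + h)).
    { split; [lra|]. destruct (classic (RInf tR)) as [HRR|HRR]; [left; auto|right].
      pose proof (dl_fin tR HRR). nra. }
    rewrite (Pt_in tR (x+h) i) by auto. replace (Pt x i) with (Pt (uf tR) i) by (rewrite Hu; auto).
    rewrite Pt_lend by (auto; rewrite Hu; auto).
    rewrite Hu. ring. }
  destruct (classic (differentiable_at n Pt x)) as [Hd|Hnd].
  - destruct (Hd (hi tR) BR2) as [l Hl].
    pose proof (dpl_left_unique _ _ _ (sg tL (hi tR)) (dl tL) HdL Hl (fun h Hh => AffL _ BR2 h ltac:(lra))) as E1.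
    pose proof (dpl_right_unique _ _ _ (sg tR (hi tR)) (dl tR) HdR Hl (fun h Hh => AffR _ BR2 h Hh)) as E2.
    rewrite (sg_in tR) in E2 by lia.
    assert (HhL: (hi tR <= hi tL)%nat).
    { destruct (Compare_dec.le_dec (hi tR) (hi tL)); auto. rewrite sg_out in E1 by lia.
      assert (0 < 1 / kk tR) by (apply Rdiv_lt_0_compat; lra). lra. }
    pose proof (proj1 (uf_spec tL HtL HJL)) as UL.
    rewrite (Pt_closed tL x j), (Pt_closed tL x (lo tL)) by (auto; try lia; try lra; right; lra).
    rewrite (B_block tL j) by (auto; lia). rewrite (sg_in tL j), (sg_in tL (lo tL)) by lia. auto.
  - destruct HG as [_ [_ [_ G3]]].
    apply (G3 x Hint Hnd (lo tL) (hi tL) (lo tR) (hi tR)); auto.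
    + intros i Hi. apply (ld_affine _ _ _ (dl tL) HdL). intros h Hh. apply AffL; auto.
    + intros i Hi. apply (rd_affine _ _ _ (dl tR) HdR). intros h Hh. apply AffR; auto.
Qed.

Lemma int_sides x : Defs.interior I x -> (exists y, I y /\ y < x) /\ (exists y, I y /\ x < y).
Proof.
  intros [e [He Hi]]. split.
  - exists (x - e/2). split; [|lra]. apply Hi. replace (x - e/2 - x) with (-(e/2)) by ring.
    rewrite Rabs_Ropp, Rabs_right; lra.
  - exists (x + e/2). split; [|lra]. apply Hi. replace (x + e/2 - x) with (e/2) by ring.
    rewrite Rabs_right; lra.
Qed.

Lemma triv_clause x y j (a : nat) : y = x -> Pn y j = Pn x j + (if Nat.eqb j a then y - x else 0).
Proof. intros ->. destruct (Nat.eqb j a); ring. Qed.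

Lemma LSL_J x : J x -> LSL n I Pn x.
Proof.
  intros HJx. pose proof (J_I x HJx) as Hx.
  destruct (isolate x Hx) as [rho [Hrho Hiso]].
  assert (Hintc: forall y, I y -> 0 < Rabs (y - x) < rho -> Defs.interior I y).
  { intros y Hy Hyx. assert (~ J y). { intros HJy. pose proof (Hiso y HJy ltac:(lra)). subst.
      replace (x - x) with 0 in Hyx by ring. rewrite Rabs_R0 in Hyx. lra. }
    apply notJ; auto. }
  destruct (classic (exists y0, I y0 /\ y0 < x)) as [HL|HL];
  destruct (classic (exists y1, I y1 /\ x < y1)) as [HR|HR].
  - destruct (left_piece x HJx HL) as [tL [HtL [HJL [HLx [HRL HwL]]]]].
    destruct (right_piece x HJx HR) as [tR [HtR [HJR [HRx HuR]]]].
    pose proof (dl_pos tL HtL HJL). pose proof (dl_pos tR HtR HJR).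
    destruct (bk_bounds tL HtL HJL). destruct (bk_bounds tR HtR HJR).
    set (eta := Rmin rho (Rmin (dl tL) (dl tR))).
    assert (He1: eta <= rho) by apply Rmin_l.
    assert (He2: eta <= Rmin (dl tL) (dl tR)) by apply Rmin_r.
    assert (Rmin (dl tL) (dl tR) <= dl tL) by apply Rmin_l.
    assert (Rmin (dl tL) (dl tR) <= dl tR) by apply Rmin_r.
    assert (He0: 0 < eta) by (unfold eta; repeat apply Rmin_glb_lt; auto).
    exists eta. split; auto. exists (lo tL), (hi tR). split; [lia|]. split; [lia|].
    split; [|split; [|split]].
    + intros y Hy Hyx j Hj. apply (left_clause x tL); auto. lra.
    + intros y Hy Hyx j Hj. apply (right_clause x tR); auto. lra.
    + intros y Hy Hyx. apply Hintc; auto. lra.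
    + intros Hint Hlt j Hj. rewrite !Pn_J by auto. apply (S3_J x tL tR); auto.
  - destruct (left_piece x HJx HL) as [tL [HtL [HJL [HLx [HRL HwL]]]]].
    pose proof (dl_pos tL HtL HJL). destruct (bk_bounds tL HtL HJL).
    set (eta := Rmin rho (dl tL)).
    assert (He1: eta <= rho) by apply Rmin_l. assert (He2: eta <= dl tL) by apply Rmin_r.
    assert (He0: 0 < eta) by (unfold eta; repeat apply Rmin_glb_lt; auto).
    exists eta. split; auto. exists (lo tL), (lo tL). split; [lia|]. split; [lia|].
    split; [|split; [|split]].
    + intros y Hy Hyx j Hj. apply (left_clause x tL); auto. lra.
    + intros y Hy Hyx j Hj. apply triv_clause. destruct (Req_dec y x); auto. exfalso. apply HR. exists y. split; auto. lra.
    + intros y Hy Hyx. apply Hintc; auto. lra.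
    + intros Hint. exfalso. apply HR. apply (int_sides x Hint).
  - destruct (right_piece x HJx HR) as [tR [HtR [HJR [HRx HuR]]]].
    pose proof (dl_pos tR HtR HJR). destruct (bk_bounds tR HtR HJR).
    set (eta := Rmin rho (dl tR)).
    assert (He1: eta <= rho) by apply Rmin_l. assert (He2: eta <= dl tR) by apply Rmin_r.
    assert (He0: 0 < eta) by (unfold eta; repeat apply Rmin_glb_lt; auto).
    exists eta. split; auto. exists (hi tR), (hi tR). split; [lia|]. split; [lia|].
    split; [|split; [|split]].
    + intros y Hy Hyx j Hj. apply triv_clause. destruct (Req_dec y x); auto. exfalso. apply HL. exists y. split; auto. lra.
    + intros y Hy Hyx j Hj. apply (right_clause x tR); auto. lra.
    + intros y Hy Hyx. apply Hintc; auto. lra.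
    + intros Hint. exfalso. apply HL. apply (int_sides x Hint).
  - exists rho. split; auto. exists 0%nat, 0%nat. split; [lia|]. split; [lia|].
    split; [|split; [|split]].
    + intros y Hy Hyx j Hj. apply triv_clause. destruct (Req_dec y x); auto. exfalso. apply HL. exists y. split; auto. lra.
    + intros y Hy Hyx j Hj. apply triv_clause. destruct (Req_dec y x); auto. exfalso. apply HR. exists y. split; auto. lra.
    + auto.
    + intros Hint. exfalso. apply HR. apply (int_sides x Hint).
Qed.

Lemma corr_sum q : I q -> ~ J q -> sumR (corr q) n = 0.
Proof.
  intros Hq HJ. destruct (bk_bounds q Hq HJ) as [Hb1 Hb2]. pose proof (dl_pos q Hq HJ).
  pose proof (kk_ge1 q). destruct (InP_self q Hq HJ) as [Hu _].
  set (e := q - uf q). set (l := lo q). set (h := hi q). set (d := dl q).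
  assert (S1: sumR (fun j => if in_block l h j then 1 / kk q else 0) n = 1).
  { pose proof (sumR_block l h n (fun _ => 1 / kk q) Hb1 Hb2) as X. cbv beta in X. rewrite X.
    rewrite sumR_const. assert (Hk: 1 <= INR (h - l + 1)) by (pose proof (kk_ge1 q) as K; unfold kk in K; exact K).
    unfold kk. fold l h. field. lra. }
  assert (S2: sumR (fun j => if in_block l h j then clamp (e - INR (h - j) * d) d else 0) n =
              Rmin e (INR (h - l + 1) * d)).
  { pose proof (sumR_block l h n (fun m => clamp (e - INR m * d) d) Hb1 Hb2) as X. cbv beta in X. rewrite X.
    apply sum_clamp; unfold e, d; lra. }
  assert (S3: sumR (fun j => if Nat.eqb j h then Rmax 0 (e - INR (h - l + 1) * d) else 0) n =
              Rmax 0 (e - INR (h - l + 1) * d)) by (apply sumR_ind1; auto).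
  rewrite (sumR_ext _ (fun j => (-e) * (if in_block l h j then 1 / kk q else 0) +
     ((if in_block l h j then clamp (e - INR (h - j) * d) d else 0) +
      (if Nat.eqb j h then Rmax 0 (e - INR (h - l + 1) * d) else 0)))).
  - rewrite !sumR_plus, sumR_scal. rewrite S1, S2, S3.
    assert (0 <= INR (h - l + 1) * d) by (apply Rmult_le_pos; [apply pos_INR|unfold d; lra]).
    unfold Rmin, Rmax. repeat destruct Rle_dec; unfold e in *; lra.
  - intros j Hj. unfold corr, Qf, sg, block_slope. fold e l h d. unfold kk. fold l h.
    destruct (in_block l h j); ring.
Qed.

Lemma Pn_cond1 : cond1 n I Pn.
Proof.
  intros q Hq. destruct (classic (J q)) as [HJ|HJ].
  - destruct (Pt_c1 q Hq) as [H1 [H2 H3]]. rewrite !Pn_J by auto. split; auto. split.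
    + intros j Hj. rewrite !Pn_J by auto. auto.
    + rewrite (sumR_ext _ (Pt q)); auto. intros j _. apply Pn_J; auto.
  - destruct (bk_bounds q Hq HJ) as [Hb1 Hb2]. pose proof (dl_pos q Hq HJ) as Hd.
    pose proof (InP_self q Hq HJ) as Hs.
    split; [|split].
    + rewrite (Pn_in q q 0) by (auto; lia). pose proof (B_nonneg q Hq HJ).
      pose proof (Qf_nonneg (lo q) (hi q) (dl q) (q - uf q) 0 ltac:(lra)). lra.
    + intros j Hj. rewrite (Pn_in q q j), (Pn_in q q (S j)) by (auto; lia).
      pose proof (B_order q j Hq HJ Hj) as HBo.
      destruct (in_block (lo q) (hi q) j) eqn:E1; destruct (in_block (lo q) (hi q) (S j)) eqn:E2;
        [apply in_block_iff in E1; apply in_block_iff in E2 | apply in_block_iff in E1; apply in_block_false in E2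
        | apply in_block_false in E1; apply in_block_iff in E2 | apply in_block_false in E1; apply in_block_false in E2].
      * rewrite (B_block q j), (B_block q (S j)) by (auto; lia).
        unfold Qf. apply in_block_iff in E1. apply in_block_iff in E2. rewrite E1, E2.
        destruct (Nat.eqb_spec j (hi q)); [apply in_block_iff in E2; lia|].
        assert (clamp (q - uf q - INR (hi q - j) * dl q) (dl q) <= clamp (q - uf q - INR (hi q - S j) * dl q) (dl q)).
        { apply clamp_mono. assert (INR (hi q - S j) * dl q <= INR (hi q - j) * dl q) by (apply INR_le_mul; [lia|lra]). lra. }
        assert (0 <= (if Nat.eqb (S j) (hi q) then Rmax 0 (q - uf q - INR (hi q - lo q + 1) * dl q) else 0))
          by (destruct Nat.eqb; [apply Rmax_l|lra]).
        lra.
      * assert (j = hi q) by lia. subst j.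
        destruct (classic (RInf q)) as [HR|HR]; [exfalso; apply (hi_inf q Hq HJ HR); auto|].
        pose proof (B_top q (hi q) Hq HJ HR Hj) as HT.
        rewrite (sg_in q (hi q)) in HT by lia. rewrite (sg_out q (S (hi q))) in HT by lia.
        rewrite <- (dl_fin q HR) in HT. pose proof (kk_ge1 q).
        replace (1 / kk q * (kk q * dl q)) with (dl q) in HT by (field; lra).
        destruct Hs as [Hs1 [|Hs2]]; [tauto|].
        pose proof (dl_fin q HR).
        unfold Qf. apply in_block_iff in E1. apply in_block_false in E2. rewrite E1, E2.
        rewrite Nat.eqb_refl. destruct (Nat.eqb_spec (S (hi q)) (hi q)); [lia|].
        rewrite Rmax_0_neg by (unfold kk in *; lra).
        pose proof (clamp_bounds (q - uf q - INR (hi q - hi q) * dl q) (dl q) ltac:(lra)). lra.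
      * unfold Qf at 1. apply in_block_false in E1. rewrite E1.
        destruct (Nat.eqb_spec j (hi q)); [lia|].
        pose proof (Qf_nonneg (lo q) (hi q) (dl q) (q - uf q) (S j) ltac:(lra)). lra.
      * assert (E1' := E1). assert (E2' := E2).
        unfold Qf. apply in_block_false in E1'. apply in_block_false in E2'. rewrite E1', E2'.
        destruct (Nat.eqb_spec j (hi q)); [lia|]. destruct (Nat.eqb_spec (S j) (hi q)); [lia|]. lra.
    + rewrite (sumR_ext _ (fun j => Pt q j + corr q j)) by (intros; apply Pn_nJ; auto).
      rewrite sumR_plus, corr_sum by auto. destruct (Pt_c1 q Hq) as [_ [_ H3]]. lra.
Qed.

Theorem construct : exists P : R -> nat -> R,
  n_system n I P /\ forall t, D t -> forall j, (j < n)%nat -> P t j = Pt t j.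
Proof.
  exists Pn. split.
  - apply lsl_nsystem; [lia| |apply Pn_cond1].
    intros x Hx. destruct (classic (J x)); [apply LSL_J|apply LSL_notJ]; auto.
  - intros t Ht j Hj. apply Pn_J. split; auto.
Qed.

End Constr.

Theorem mainTheorem5 :
  forall (n : nat) (I : R -> Prop) (Pt : R -> nat -> R) (D : R -> Prop),
    (2 <= n)%nat ->
    good_interval I ->
    gen_n_system n I Pt ->
    (forall t, D t -> I t) ->
    discrete_in I D ->
    exists P : R -> nat -> R,
      n_system n I P /\
      forall t, D t -> forall j, (j < n)%nat -> P t j = Pt t j.
Proof.
  intros. apply construct; auto.
Qed.
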